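(* Let $N\ge2$, $T=\{x\in\mathbb{R}^N:1<|x|<2\}$, $2<p<2^*$ ($2^*=\frac{2N}{N-2}$ if $N\ge3$, $+\infty$ if $N=2$), and for $\lambda>0$ let $u_\lambda$ be the unique positive solution in $H^1_{0,rad}(T)$ of $-\Delta u+\lambda u=u^{p-1}$ in $T$, $u=0$ on $\partial T$. Then as $\lambda\to+\infty$: (1) if $N=2$ and $p<6$, or $N\ge3$, then $\int_T u_\lambda^2\to+\infty$; (2) if $N=2$ and $p=6$, then $\liminf_{\lambda\to+\infty}\int_T u_\lambda^2\in(0,+\infty)$; (3) if $N=2$ and $p>6$, then $\int_T u_\lambda^2\to0$. *)

(* Defs.v *)
From Stdlib Require Import Reals.
From Coquelicot Require Import Coquelicot.
Open Scope R_scope.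

(* A radial function u(x) = v(|x|) on the annulus T = {1 < |x| < 2} in R^N.
   [radial_pos_solution N p lam v]: v is a positive classical solution of the
   radial form of  -Delta u + lam u = u^(p-1) in T,  u = 0 on dT:
     -(v'' + (N-1)/r v') + lam v = v^(p-1)  on (1,2),   v(1) = v(2) = 0,
   with v continuous on [1,2] and twice differentiable on (1,2). *)
Definition radial_pos_solution (N : nat) (p lam : R) (v : R -> R) : Prop :=
  (forall r, 1 <= r <= 2 ->
     filterlim v (within (fun x => 1 <= x <= 2) (locally r)) (locally (v r))) /\
  v 1 = 0 /\ v 2 = 0 /\
  (forall r, 1 < r < 2 ->
     0 < v r /\ ex_derive v r /\ ex_derive (Derive v) r /\
     - (Derive (Derive v) r + (INR N - 1) / r * Derive v r) + lam * v r
       = Rpower (v r) (p - 1)).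

(* int_T u^2 dx = |S^{N-1}| * int_1^2 v(r)^2 r^(N-1) dr ; we keep the radial
   integral, the positive constant |S^{N-1}| does not affect the claims. *)
Definition radial_mass (N : nat) (v : R -> R) : R :=
  RInt (fun r => (v r) ^ 2 * r ^ (N - 1)) 1 2.

Definition liminf_pinfty_is (f : R -> R) (l : R) : Prop :=
  (forall eps, 0 < eps -> exists M, forall lam, M < lam -> l - eps < f lam) /\
  (forall eps, 0 < eps -> forall M, exists lam, M < lam /\ f lam < l + eps).

(* Main.v *)
Require Import Defs.
From Stdlib Require Import Reals Lra Lia Classical.
From Coquelicot Require Import Coquelicot.
Open Scope R_scope.

Lemma mvt_strict (f df : R -> R) (a b : R) :
  a < b ->
  (forall x, a < x < b -> is_derive f x (df x)) ->
  (forall x, a <= x <= b -> continuity_pt f x) ->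
  exists c, a < c < b /\ f b - f a = df c * (b - a).
Proof.
  intros Hab Hd Hc.
  assert (pr1 : forall c, a < c < b -> derivable_pt f c).
  { intros c Hc'. exists (df c). apply is_derive_Reals. now apply Hd. }
  assert (pr2 : forall c, a < c < b -> derivable_pt id c).
  { intros c _. apply derivable_pt_id. }
  destruct (MVT f id a b pr1 pr2 Hab Hc) as [c [P HP]].
  { intros c _. apply derivable_continuous_pt, derivable_pt_id. }
  exists c. split; [exact P|].
  assert (E1 : derive_pt f c (pr1 c P) = df c).
  { apply derive_pt_eq_0. apply is_derive_Reals. now apply Hd. }
  assert (E2 : derive_pt id c (pr2 c P) = 1).
  { apply derive_pt_eq_0. apply derivable_pt_lim_id. }
  rewrite E1, E2 in HP. unfold id in HP. lra.
Qed.

Lemma incr_lemma (f df : R -> R) (a b : R) :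
  a <= b ->
  (forall x, a < x < b -> is_derive f x (df x)) ->
  (forall x, a <= x <= b -> continuity_pt f x) ->
  (forall x, a < x < b -> 0 <= df x) -> f a <= f b.
Proof.
  intros Hab Hd Hc Hs. destruct (Req_dec a b) as [->|Hne]; [lra|].
  destruct (mvt_strict f df a b) as [c [Hc1 Hc2]]; try lra; auto.
  assert (0 <= df c * (b - a)) by (apply Rmult_le_pos; [apply Hs; lra| lra]). lra.
Qed.

Lemma decr_lemma (f df : R -> R) (a b : R) :
  a <= b ->
  (forall x, a < x < b -> is_derive f x (df x)) ->
  (forall x, a <= x <= b -> continuity_pt f x) ->
  (forall x, a < x < b -> df x <= 0) -> f b <= f a.
Proof.
  intros Hab Hd Hc Hs. destruct (Req_dec a b) as [->|Hne]; [lra|].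
  destruct (mvt_strict f df a b) as [c [Hc1 Hc2]]; try lra; auto.
  assert (df c * (b - a) <= 0).
  { assert (0 <= - df c * (b - a)) by (apply Rmult_le_pos; [generalize (Hs c Hc1); lra| lra]). nra. }
  lra.
Qed.

Lemma deriv_right_min (f : R -> R) x l eta :
  derivable_pt_lim f x l -> 0 < eta ->
  (forall h, 0 < h < eta -> f x <= f (x + h)) -> 0 <= l.
Proof.
  intros Hd He Hm. destruct (Rle_lt_dec 0 l) as [|Hl]; [auto|exfalso].
  destruct (Hd (- l / 2)) as [d Hdd]; [lra|].
  set (h := Rmin (d/2) (eta/2)).
  assert (Hh0 : 0 < h) by (unfold h; apply Rmin_pos; generalize (cond_pos d); lra).
  assert (Hhd : h < d) by (unfold h; generalize (Rmin_l (d/2) (eta/2)) (cond_pos d); lra).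
  assert (Hhe : h < eta) by (unfold h; generalize (Rmin_r (d/2) (eta/2)); lra).
  specialize (Hdd h (Rgt_not_eq _ _ Hh0)).
  rewrite Rabs_pos_eq in Hdd by lra. specialize (Hdd Hhd).
  specialize (Hm h (conj Hh0 Hhe)).
  assert (0 <= (f (x + h) - f x) / h) by (apply Rdiv_le_0_compat; lra).
  apply Rabs_def2 in Hdd. lra.
Qed.

Lemma deriv_left_min (f : R -> R) x l eta :
  derivable_pt_lim f x l -> 0 < eta ->
  (forall h, 0 < h < eta -> f x <= f (x - h)) -> l <= 0.
Proof.
  intros Hd He Hm. destruct (Rle_lt_dec l 0) as [|Hl]; [auto|exfalso].
  destruct (Hd (l / 2)) as [d Hdd]; [lra|].
  set (h := Rmin (d/2) (eta/2)).
  assert (Hh0 : 0 < h) by (unfold h; apply Rmin_pos; generalize (cond_pos d); lra).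
  assert (Hhd : h < d) by (unfold h; generalize (Rmin_l (d/2) (eta/2)) (cond_pos d); lra).
  assert (Hhe : h < eta) by (unfold h; generalize (Rmin_r (d/2) (eta/2)); lra).
  assert (Hn : -h <> 0) by lra.
  specialize (Hdd (-h) Hn).
  rewrite Rabs_Ropp, Rabs_pos_eq in Hdd by lra. specialize (Hdd Hhd).
  specialize (Hm h (conj Hh0 Hhe)).
  replace (x + - h) with (x - h) in Hdd by ring.
  assert (0 <= (f (x - h) - f x) / h) by (apply Rdiv_le_0_compat; lra).
  assert (E : (f (x - h) - f x) / - h = - ((f (x - h) - f x) / h)) by (field; lra).
  rewrite E in Hdd.
  apply Rabs_def2 in Hdd. lra.
Qed.

Lemma sign_near (g : R -> R) x D :
  derivable_pt_lim g x D -> g x = 0 -> D < 0 ->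
  exists d, 0 < d /\ forall h, 0 < h < d -> g (x + h) < 0 /\ 0 < g (x - h).
Proof.
  intros Hd H0 HD. destruct (Hd (- D / 2)) as [d Hdd]; [lra|].
  exists d. split; [apply cond_pos|]. intros h Hh. split.
  - assert (Hn : h <> 0) by lra. specialize (Hdd h Hn).
    rewrite Rabs_pos_eq in Hdd by lra. specialize (Hdd (proj2 Hh)).
    rewrite H0 in Hdd. apply Rabs_def2 in Hdd.
    assert (g (x + h) / h < 0) by lra.
    replace (g (x+h)) with (g (x + h) / h * h) by (field; lra). nra.
  - assert (Hn : -h <> 0) by lra. specialize (Hdd (-h) Hn).
    rewrite Rabs_Ropp, Rabs_pos_eq in Hdd by lra. specialize (Hdd (proj2 Hh)).
    rewrite H0 in Hdd. apply Rabs_def2 in Hdd.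
    replace (x + - h) with (x - h) in Hdd by ring.
    assert (g (x - h) / h > 0).
    { assert (E : (g (x - h) - 0) / - h = - (g (x - h) / h)) by (field; lra). rewrite E in Hdd. lra. }
    replace (g (x-h)) with (g (x - h) / h * h) by (field; lra). nra.
Qed.

Lemma is_derive_eq' (f : R -> R) x l l' : is_derive f x l -> l = l' -> is_derive f x l'.
Proof. intros H ->; exact H. Qed.

Lemma is_derive_Rpower_comp (g : R -> R) x dg e :
  0 < g x -> is_derive g x dg ->
  is_derive (fun t => Rpower (g t) e) x (e * Rpower (g x) (e - 1) * dg).
Proof.
  intros Hg Hd. eapply is_derive_eq'.
  apply (is_derive_comp (fun y => Rpower y e) g). 
  apply is_derive_Reals, derivable_pt_lim_power, Hg. exact Hd.
  simpl. unfold scal; simpl; unfold mult; simpl. ring.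
Qed.

Lemma is_derive_plus' (f g : R -> R) x a b : is_derive f x a -> is_derive g x b ->
  is_derive (fun t => f t + g t) x (a + b).
Proof. intros. apply (is_derive_plus f g x a b); auto. Qed.
Lemma is_derive_mult' (f g : R -> R) x a b : is_derive f x a -> is_derive g x b ->
  is_derive (fun t => f t * g t) x (a * g x + f x * b).
Proof. intros. apply (is_derive_mult f g x a b); auto. intros; apply Rmult_comm. Qed.
Lemma is_derive_const' (c x : R) : is_derive (fun _ => c) x 0.
Proof. apply (is_derive_const c x). Qed.
Lemma is_derive_id' (x : R) : is_derive (fun t => t) x 1.
Proof. apply (is_derive_id x). Qed.
Lemma is_derive_cont (f : R -> R) x l : is_derive f x l -> continuity_pt f x.
Proof. intros H. apply derivable_continuous_pt. exists l. apply is_derive_Reals, H. Qed.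
Lemma deriv_zero_max (f : R -> R) x l eta :
  derivable_pt_lim f x l -> 0 < eta ->
  (forall h, 0 < h < eta -> f (x + h) <= f x /\ f (x - h) <= f x) -> l = 0.
Proof.
  intros Hd He Hm.
  assert (Hd' : derivable_pt_lim (fun t => - f t) x (- l)).
  { apply is_derive_Reals. apply is_derive_Reals in Hd.
    apply (is_derive_opp f x l Hd). }
  assert (0 <= - l).
  { apply (deriv_right_min _ x _ eta Hd' He). intros h Hh. specialize (Hm h Hh). lra. }
  assert (- l <= 0).
  { apply (deriv_left_min _ x _ eta Hd' He). intros h Hh. specialize (Hm h Hh). lra. }
  lra.
Qed.
Lemma is_derive_ext' (f g : R -> R) x l : (forall t : R, f t = g t) -> is_derive f x l -> is_derive g x l.
Proof. intros H1 H2. apply (is_derive_ext f g x l H1 H2). Qed.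
Ltac toR := match goal with |- ?a = ?b => change (@eq R a b) end.

Lemma cont_eps (f : R -> R) x : continuity_pt f x ->
  forall eps, 0 < eps -> exists d, 0 < d /\ forall y, Rabs (y - x) < d -> Rabs (f y - f x) < eps.
Proof.
  intros Hc eps He. destruct (Hc eps He) as [d [Hd Hy]].
  exists d. split; auto. intros y Hyd.
  destruct (Req_dec y x) as [->|Hne].
  - rewrite Rminus_diag, Rabs_R0. lra.
  - apply (Hy y). split; [split; [exact I| auto] | exact Hyd].
Qed.

Lemma Rpower_pos x e : 0 < Rpower x e.
Proof. unfold Rpower. apply exp_pos. Qed.

Lemma Rpower_split x e : 0 < x -> Rpower x (2 + e) = x ^ 2 * Rpower x e.
Proof.
  intros Hx. rewrite Rpower_plus. f_equal.
  replace 2 with (INR 2) by (simpl; ring). apply Rpower_pow; auto.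
Qed.

Lemma Rpower_split1 x e : 0 < x -> Rpower x (1 + e) = x * Rpower x e.
Proof.
  intros Hx. rewrite Rpower_plus. f_equal. apply Rpower_1; auto.
Qed.

Lemma Rpower_ge1 x e : 1 <= x -> 0 <= e -> 1 <= Rpower x e.
Proof.
  intros Hx He. rewrite <- (Rpower_O x) by lra. apply Rle_Rpower; lra.
Qed.

Lemma Rpower_lt1 x e : 0 < x < 1 -> 0 < e -> Rpower x e < 1.
Proof.
  intros Hx He. rewrite <- (Rpower_O x) by lra.
  unfold Rpower. apply exp_increasing.
  assert (ln x < 0) by (rewrite <- ln_1; apply ln_increasing; lra). nra.
Qed.

Lemma Rpower_inv_e x e : 0 < x -> 0 < e -> Rpower (Rpower x (/ e)) e = x.
Proof.
  intros Hx He. rewrite Rpower_mult. replace (/ e * e) with 1 by (field; lra).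
  apply Rpower_1; auto.
Qed.

Lemma Rpower_base1 e : Rpower 1 e = 1.
Proof. unfold Rpower. rewrite ln_1, Rmult_0_r, exp_0. reflexivity. Qed.

Lemma Rpower_gt1_base x e : 0 < x -> 0 < e -> 1 < Rpower x e -> 1 < x.
Proof.
  intros Hx He H. destruct (Rle_lt_dec x 1) as [Hle|]; auto.
  assert (Rpower x e <= Rpower 1 e) by (apply Rle_Rpower_l; lra).
  rewrite Rpower_base1 in H0. lra.
Qed.

Lemma Rpower_lt_base x y e : 0 < x -> 0 < y -> 0 < e -> Rpower x e < Rpower y e -> x < y.
Proof.
  intros Hx Hy He H. destruct (Rle_lt_dec y x) as [Hle|]; auto.
  assert (Rpower y e <= Rpower x e) by (apply Rle_Rpower_l; lra). lra.
Qed.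

Lemma Rpower_le_base x y e : 0 < x -> 0 < y -> 0 < e -> Rpower x e <= Rpower y e -> x <= y.
Proof.
  intros Hx Hy He H. destruct (Rle_lt_dec x y) as [|Hlt]; auto.
  assert (Rpower y e < Rpower x e) by (apply Rlt_Rpower_l; lra). lra.
Qed.

Lemma cont_exp_lin (s x : R) : continuity_pt (fun t => exp (s * t)) x.
Proof.
  apply (is_derive_cont _ _ (s * exp (s * x))).
  eapply is_derive_eq'.
  apply (is_derive_comp exp (fun t => s * t)). apply is_derive_exp.
  eapply is_derive_eq'. apply is_derive_scal, is_derive_id'. reflexivity.
  simpl. unfold scal; simpl; unfold mult; simpl. ring.
Qed.

Lemma is_derive_exp_lin (s c x : R) : is_derive (fun t => exp (s * (t - c))) x (s * exp (s * (x - c))).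
Proof.
  eapply is_derive_eq'.
  apply (is_derive_comp exp (fun t => s * (t - c))). apply is_derive_exp.
  eapply is_derive_eq'. apply is_derive_scal.
  apply (is_derive_ext' (fun t => t + (- c))). intros t; simpl; lra.
  eapply is_derive_eq'. apply is_derive_plus'. apply is_derive_id'. apply is_derive_const'. reflexivity.
  reflexivity.
  simpl. unfold scal; simpl; unfold mult; simpl. ring.
Qed.

Lemma cont_mult_exp (f : R -> R) s x : continuity_pt f x ->
  continuity_pt (fun t => f t * exp (s * t)) x.
Proof.
  intros H. apply (continuity_pt_mult f (fun t => exp (s * t))); auto. apply cont_exp_lin.
Qed.

Lemma RInt_exp_left (s a b : R) : 0 < s -> a <= b ->
  RInt (fun r => exp (2 * s * (r - b))) a b <= 1 / (2 * s).
Proof.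
  intros Hs Hab.
  assert (H : is_RInt (fun r => exp (2 * s * (r - b))) a b
     (minus ((fun r => exp (2 * s * (r - b)) / (2 * s)) b) ((fun r => exp (2 * s * (r - b)) / (2 * s)) a))).
  { apply (is_RInt_derive (fun r => exp (2 * s * (r - b)) / (2 * s))).
    - intros x _. eapply is_derive_eq'.
      apply (is_derive_ext' (fun t => / (2 * s) * exp (2 * s * (t - b)))). intros t; field; lra.
      apply is_derive_scal, is_derive_exp_lin. toR. field. lra.
    - intros x _. apply continuity_pt_filterlim.
      apply (is_derive_cont _ _ _ (is_derive_exp_lin (2*s) b x)). }
  rewrite (is_RInt_unique _ _ _ _ H). simpl. unfold minus, plus, opp; simpl.
  rewrite Rminus_diag, Rmult_0_r, exp_0.
  assert (0 < exp (2 * s * (a - b)) / (2 * s)) by (apply Rdiv_lt_0_compat; [apply exp_pos| lra]).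
  lra.
Qed.

Lemma RInt_exp_right (s a b : R) : 0 < s -> a <= b ->
  RInt (fun r => exp (- (2 * s) * (r - a))) a b <= 1 / (2 * s).
Proof.
  intros Hs Hab.
  assert (H : is_RInt (fun r => exp (- (2 * s) * (r - a))) a b
     (minus ((fun r => - exp (- (2 * s) * (r - a)) / (2 * s)) b) ((fun r => - exp (- (2 * s) * (r - a)) / (2 * s)) a))).
  { apply (is_RInt_derive (fun r => - exp (- (2 * s) * (r - a)) / (2 * s))).
    - intros x _. eapply is_derive_eq'.
      apply (is_derive_ext' (fun t => (- / (2 * s)) * exp (- (2 * s) * (t - a)))). intros t; field; lra.
      apply is_derive_scal, is_derive_exp_lin. toR. field. lra.
    - intros x _. apply continuity_pt_filterlim.
      apply (is_derive_cont _ _ _ (is_derive_exp_lin (- (2*s)) a x)). }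
  rewrite (is_RInt_unique _ _ _ _ H). simpl. unfold minus, plus, opp; simpl.
  rewrite Rminus_diag, Rmult_0_r, exp_0.
  assert (0 < exp (- (2 * s) * (b - a)) / (2 * s)) by (apply Rdiv_lt_0_compat; [apply exp_pos| lra]).
  lra.
Qed.

Lemma RInt_le_const (f : R -> R) a b C : a <= b -> ex_RInt f a b ->
  (forall x, a < x < b -> f x <= C) -> RInt f a b <= C * (b - a).
Proof.
  intros Hab Hex Hf.
  assert (RInt f a b <= RInt (fun _ => C) a b).
  { apply RInt_le; auto. apply ex_RInt_const. }
  rewrite RInt_const in H. simpl in H. unfold scal in H; simpl in H; unfold mult in H; simpl in H. lra.
Qed.

Lemma RInt_ge_const (f : R -> R) a b C : a <= b -> ex_RInt f a b ->
  (forall x, a < x < b -> C <= f x) -> C * (b - a) <= RInt f a b.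
Proof.
  intros Hab Hex Hf.
  assert (RInt (fun _ => C) a b <= RInt f a b).
  { apply RInt_le; auto. apply ex_RInt_const. }
  rewrite RInt_const in H. simpl in H. unfold scal in H; simpl in H; unfold mult in H; simpl in H. lra.
Qed.

Section Analysis.
Variables (N : nat) (p L : R) (w w1 w2 : R -> R).
Hypothesis HN : (2 <= N)%nat.
Hypothesis Hp : 2 < p.
Hypothesis HL : 0 < L.
Hypothesis Hc : forall r, continuity_pt w r.
Hypothesis Hw1 : w 1 = 0.
Hypothesis Hw2 : w 2 = 0.
Hypothesis Hpos : forall r, 1 < r < 2 -> 0 < w r.
Hypothesis Hd1 : forall r, 1 < r < 2 -> is_derive w r (w1 r).
Hypothesis Hd2 : forall r, 1 < r < 2 -> is_derive w1 r (w2 r).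
Hypothesis Heq : forall r, 1 < r < 2 ->
  w2 r = L * (w r - Rpower (w r) (p-1)) - (INR N - 1) / r * w1 r.

Definition Af := INR N - 1.
Definition ff (x : R) := - x ^ 2 / 2 + Rpower x p / p.
Definition En (r : R) := w1 r ^ 2 / 2 + L * ff (w r).

Lemma Af_ge1 : 1 <= Af.
Proof.
  unfold Af. apply le_INR in HN. simpl in HN. lra.
Qed.

Lemma w1_cont r : 1 < r < 2 -> continuity_pt w1 r.
Proof.
  intros Hr. apply (is_derive_cont _ _ (w2 r)). now apply Hd2.
Qed.

Lemma En_der r : 1 < r < 2 -> is_derive En r (- (Af / r) * w1 r ^ 2).
Proof.
  intros Hr. unfold En, ff.
  eapply is_derive_eq'.
  - apply is_derive_plus'.
    + apply (is_derive_mult' (fun t => w1 t ^ 2) (fun _ => / 2)).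
      * apply is_derive_pow, Hd2, Hr.
      * apply is_derive_const'.
    + apply (is_derive_mult' (fun _ => L) (fun t => - w t ^ 2 / 2 + Rpower (w t) p / p)).
      * apply is_derive_const'.
      * apply is_derive_plus'.
        -- apply (is_derive_mult' (fun t => - w t ^ 2) (fun _ => / 2)).
           ++ apply (is_derive_ext' (fun t => -1 * w t ^ 2)). intros t; simpl; lra.
              apply is_derive_scal, is_derive_pow, Hd1, Hr.
           ++ apply is_derive_const'.
        -- apply (is_derive_mult' (fun t => Rpower (w t) p) (fun _ => / p)).
           ++ apply is_derive_Rpower_comp. apply Hpos, Hr. apply Hd1, Hr.
           ++ apply is_derive_const'.
  - rewrite Heq by auto. unfold Af. simpl.
    assert (Hw : 0 < w r) by (apply Hpos; auto).
    field. split; lra.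
Qed.

Lemma En_cont r : 1 < r < 2 -> continuity_pt En r.
Proof.
  intros Hr. eapply is_derive_cont. now apply En_der.
Qed.

Lemma En_decr x y : 1 < x -> x <= y -> y < 2 -> En y <= En x.
Proof.
  intros H1 H2 H3. apply (decr_lemma En (fun r => - (Af / r) * w1 r ^ 2)); auto.
  - intros r Hr. apply En_der. lra.
  - intros r Hr. apply En_cont. lra.
  - intros r Hr. assert (0 <= Af / r) by (apply Rdiv_le_0_compat; generalize Af_ge1; lra).
    assert (0 <= w1 r ^ 2) by (apply pow2_ge_0). nra.
Qed.

Lemma En_nonneg r : 1 < r < 2 -> 0 <= En r.
Proof.
  intros Hr. destruct (Rle_lt_dec 0 (En r)) as [|Hneg]; [auto|exfalso].
  set (eps := sqrt (- En r / L)).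
  assert (Heps : 0 < eps) by (apply sqrt_lt_R0; apply Rdiv_lt_0_compat; lra).
  destruct (cont_eps w 2 (Hc 2) eps Heps) as [d [Hd Hy]].
  set (y := Rmax r (2 - d / 2)).
  assert (Hy1 : r <= y) by apply Rmax_l.
  assert (Hy2 : y < 2) by (unfold y; apply Rmax_lub_lt; lra).
  assert (Hy3 : 2 - d/2 <= y) by apply Rmax_r.
  specialize (Hy y). rewrite Hw2, Rminus_0_r in Hy.
  assert (Hwy : Rabs (w y) < eps) by (apply Hy; rewrite Rabs_left; lra).
  assert (Hdec : En y <= En r) by (apply En_decr; lra).
  assert (Hwy2 : w y ^ 2 < eps ^ 2).
  { assert (0 < w y) by (apply Hpos; lra). rewrite Rabs_pos_eq in Hwy by lra. nra. }
  assert (Heps2 : eps ^ 2 = - En r / L).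
  { unfold eps. simpl. rewrite Rmult_1_r. apply sqrt_sqrt. apply Rlt_le, Rdiv_lt_0_compat; lra. }
  assert (Hy' : En y = w1 y ^ 2 / 2 - L * w y ^2/2 + L*(Rpower (w y) p / p)) by (unfold En, ff; field; lra).
  assert (0 < Rpower (w y) p) by apply Rpower_pos.
  assert (0 <= w1 y ^ 2) by apply pow2_ge_0.
  assert (L * w y ^ 2 < - En r) by (rewrite Heps2 in Hwy2; apply (Rmult_lt_compat_l L) in Hwy2; [|lra]; field_simplify in Hwy2; lra).
  assert (0 < Rpower (w y) p / p) by (apply Rdiv_lt_0_compat; lra).
  assert (0 < L * (Rpower (w y) p / p)) by (apply Rmult_lt_0_compat; lra).
  lra.
Qed.


Lemma ff_eq x : 0 < x -> ff x = x ^ 2 * (Rpower x (p - 2) / p - 1 / 2).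
Proof.
  intros Hx. unfold ff. replace p with (2 + (p - 2)) at 1 by ring.
  rewrite Rpower_split by auto. field. lra.
Qed.

Lemma crit_big t : 1 < t < 2 -> w1 t = 0 -> p / 2 <= Rpower (w t) (p - 2).
Proof.
  intros Ht H0. generalize (En_nonneg t Ht). unfold En. rewrite H0, ff_eq by (apply Hpos; auto).
  intros HE. assert (Hw : 0 < w t) by (apply Hpos; auto).
  assert (0 <= w t ^ 2 * (Rpower (w t) (p - 2) / p - 1 / 2)).
  { simpl in HE. assert (0 <= L * (w t ^ 2 * (Rpower (w t) (p - 2) / p - 1 / 2))) by lra.
    destruct (Rle_lt_dec 0 (w t ^ 2 * (Rpower (w t) (p - 2) / p - 1 / 2))); auto. nra. }
  assert (0 < w t ^ 2) by (apply pow_lt; auto).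
  assert (0 <= Rpower (w t) (p - 2) / p - 1 / 2).
  { destruct (Rle_lt_dec 0 (Rpower (w t) (p - 2) / p - 1 / 2)); auto. nra. }
  assert (Rpower (w t) (p - 2) / p * p = Rpower (w t) (p - 2)) by (field; lra).
  nra.
Qed.

Lemma w2_at_crit t : 1 < t < 2 -> w1 t = 0 -> w2 t < 0.
Proof.
  intros Ht H0. rewrite Heq by auto. rewrite H0.
  assert (Hw : 0 < w t) by (apply Hpos; auto).
  generalize (crit_big t Ht H0). intros Hb.
  replace (p - 1) with (1 + (p - 2)) by ring. rewrite Rpower_split1 by auto.
  assert (w t * (1 - Rpower (w t) (p - 2)) < 0).
  { assert (1 - Rpower (w t) (p-2) < 0) by lra. nra. }
  replace (L * (w t - w t * Rpower (w t) (p - 2)) - (INR N - 1) / t * 0)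
    with (L * (w t * (1 - Rpower (w t) (p - 2)))) by ring.
  nra.
Qed.

Lemma SLM t : 1 < t < 2 -> w1 t = 0 ->
  exists d, 0 < d /\ forall h, 0 < h < d -> 1 < t - h /\ t + h < 2 /\ w (t + h) < w t /\ w (t - h) < w t.
Proof.
  intros Ht H0.
  destruct (sign_near w1 t (w2 t)) as [d1 [Hd1p Hs1]].
  { apply is_derive_Reals, Hd2, Ht. } { exact H0. } { apply w2_at_crit; auto. }
  set (d := Rmin d1 (Rmin (t - 1) (2 - t))).
  assert (Hdd : 0 < d) by (unfold d; repeat apply Rmin_pos; lra).
  assert (Hd_1 : d <= d1) by apply Rmin_l.
  assert (Hd_2 : d <= t - 1) by (unfold d; eapply Rle_trans; [apply Rmin_r| apply Rmin_l]).
  assert (Hd_3 : d <= 2 - t) by (unfold d; eapply Rle_trans; [apply Rmin_r| apply Rmin_r]).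
  exists d. split; auto. intros h Hh.
  split; [lra|]. split; [lra|]. split.
  - destruct (mvt_strict w w1 t (t + h)) as [c [Hc1 Hc2]]; try lra.
    + intros x Hx. apply Hd1. lra.
    + intros x _. apply Hc.
    + assert (w1 c < 0).
      { replace c with (t + (c - t)) by ring. apply (Hs1 (c - t)). lra. }
      assert (w1 c * (t + h - t) < 0) by (apply Rmult_neg_pos; lra). lra.
  - destruct (mvt_strict w w1 (t - h) t) as [c [Hc1 Hc2]]; try lra.
    + intros x Hx. apply Hd1. lra.
    + intros x _. apply Hc.
    + assert (0 < w1 c).
      { replace c with (t - (t - c)) by ring. apply (Hs1 (t - c)). lra. }
      assert (0 < w1 c * (t - (t - h))) by (apply Rmult_lt_0_compat; lra). lra.
Qed.

Lemma max_exists : exists r0, 1 < r0 < 2 /\ (forall x, 1 <= x <= 2 -> w x <= w r0).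
Proof.
  destruct (continuity_ab_maj w 1 2) as [M [HM1 HM2]]; [lra| intros; apply Hc|].
  assert (H15 : 0 < w (3/2)) by (apply Hpos; lra).
  assert (w (3/2) <= w M) by (apply HM1; lra).
  exists M. split; auto.
  destruct (Req_dec M 1) as [E|E]; [rewrite E, Hw1 in *; lra|].
  destruct (Req_dec M 2) as [E2|E2]; [rewrite E2, Hw2 in *; lra|].
  lra.
Qed.

Section WithMax.
Variable r0 : R.
Hypothesis Hr0 : 1 < r0 < 2.
Hypothesis Hmax : forall x, 1 <= x <= 2 -> w x <= w r0.

Lemma w1_r0 : w1 r0 = 0.
Proof.
  apply (deriv_zero_max w r0 (w1 r0) (Rmin (r0 - 1) (2 - r0))).
  - apply is_derive_Reals, Hd1, Hr0.
  - apply Rmin_pos; lra.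
  - intros h Hh. generalize (Rmin_l (r0 - 1) (2 - r0)) (Rmin_r (r0 - 1) (2 - r0)). intros.
    split; apply Hmax; lra.
Qed.

Lemma W_pos : 0 < w r0.
Proof. apply Hpos, Hr0. Qed.

Lemma W_big : p / 2 <= Rpower (w r0) (p - 2).
Proof. apply crit_big; [exact Hr0| exact w1_r0]. Qed.

Lemma rise t : 1 < t < r0 -> 0 < w1 t.
Proof.
  intros Ht. destruct (Rlt_le_dec 0 (w1 t)) as [|Hle]; [auto|exfalso].
  destruct (continuity_ab_min w t r0) as [q [Hq1 Hq2]]; [lra| intros; apply Hc|].
  assert (Hq' : exists q', t <= q' < r0 /\ forall x, t <= x <= r0 -> w q' <= w x).
  { destruct (Req_dec q r0) as [Eq|Eq].
    - exists ((t + r0) / 2). split; [lra|]. intros x Hx.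
      assert (w ((t + r0)/2) <= w r0) by (apply Hmax; lra).
      assert (w q <= w x) by (apply Hq1; auto). rewrite Eq in *.
      lra.
    - exists q. split; [lra| auto]. }
  destruct Hq' as [q' [Hq'1 Hq'2]].
  assert (Hq'r : 1 < q' < 2) by lra.
  assert (Hge : 0 <= w1 q').
  { apply (deriv_right_min w q' (w1 q') (r0 - q')).
    - apply is_derive_Reals, Hd1; auto.
    - lra.
    - intros h Hh. apply Hq'2. lra. }
  assert (Hz : w1 q' = 0).
  { destruct (Req_dec q' t) as [Et|Et].
    - rewrite Et in *. lra.
    - assert (w1 q' <= 0).
      { apply (deriv_left_min w q' (w1 q') (q' - t)).
        - apply is_derive_Reals, Hd1; auto.
        - lra.
        - intros h Hh. apply Hq'2. lra. }
      lra. }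
  destruct (SLM q' Hq'r Hz) as [d [Hd Hd']].
  set (h := Rmin (d / 2) ((r0 - q') / 2)).
  assert (Hh : 0 < h < d) by (unfold h; split; [apply Rmin_pos; lra| generalize (Rmin_l (d/2) ((r0-q')/2)); lra]).
  assert (Hh2 : h <= (r0 - q') / 2) by apply Rmin_r.
  destruct (Hd' h Hh) as [_ [_ [Hlt _]]].
  assert (w q' <= w (q' + h)) by (apply Hq'2; lra). lra.
Qed.

Lemma fall t : r0 < t < 2 -> w1 t < 0.
Proof.
  intros Ht. destruct (Rlt_le_dec (w1 t) 0) as [|Hle]; [auto|exfalso].
  destruct (continuity_ab_min w r0 t) as [q [Hq1 Hq2]]; [lra| intros; apply Hc|].
  assert (Hq' : exists q', r0 < q' <= t /\ forall x, r0 <= x <= t -> w q' <= w x).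
  { destruct (Req_dec q r0) as [Eq|Eq].
    - exists ((t + r0) / 2). split; [lra|]. intros x Hx.
      assert (w ((t + r0)/2) <= w r0) by (apply Hmax; lra).
      assert (w q <= w x) by (apply Hq1; auto). rewrite Eq in *.
      lra.
    - exists q. split; [lra| auto]. }
  destruct Hq' as [q' [Hq'1 Hq'2]].
  assert (Hq'r : 1 < q' < 2) by lra.
  assert (Hle' : w1 q' <= 0).
  { apply (deriv_left_min w q' (w1 q') (q' - r0)).
    - apply is_derive_Reals, Hd1; auto.
    - lra.
    - intros h Hh. apply Hq'2. lra. }
  assert (Hz : w1 q' = 0).
  { destruct (Req_dec q' t) as [Et|Et].
    - rewrite Et in *. lra.
    - assert (0 <= w1 q').
      { apply (deriv_right_min w q' (w1 q') (t - q')).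
        - apply is_derive_Reals, Hd1; auto.
        - lra.
        - intros h Hh. apply Hq'2. lra. }
      lra. }
  destruct (SLM q' Hq'r Hz) as [d [Hd Hd']].
  set (h := Rmin (d / 2) ((q' - r0) / 2)).
  assert (Hh : 0 < h < d) by (unfold h; split; [apply Rmin_pos; lra| generalize (Rmin_l (d/2) ((q'-r0)/2)); lra]).
  assert (Hh2 : h <= (q' - r0) / 2) by apply Rmin_r.
  destruct (Hd' h Hh) as [_ [_ [_ Hlt]]].
  assert (w q' <= w (q' - h)) by (apply Hq'2; lra). lra.
Qed.


Definition kk := Rpower (p / 2) (/ (p - 2)).
Definition c0 := kk ^ 2 / 2.
Definition beta := exp (2 * Af).

Lemma kk_pos : 0 < kk.
Proof. apply Rpower_pos. Qed.

Lemma kk_q : Rpower kk (p - 2) = p / 2.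
Proof. apply Rpower_inv_e; lra. Qed.

Lemma c0_nonneg : 0 <= c0.
Proof. unfold c0. assert (0 <= kk ^ 2) by apply pow2_ge_0. lra. Qed.

Lemma negff_bound x : 0 < x -> - ff x <= c0.
Proof.
  intros Hx. destruct (Rle_lt_dec x kk) as [Hle|Hlt].
  - unfold ff, c0. assert (0 < Rpower x p / p) by (apply Rdiv_lt_0_compat; [apply Rpower_pos| lra]).
    assert (x ^ 2 <= kk ^ 2) by (apply pow_incr; lra). lra.
  - rewrite ff_eq by auto.
    assert (p / 2 < Rpower x (p - 2)) by (rewrite <- kk_q; apply Rlt_Rpower_l; [lra| split; [apply kk_pos| auto]]).
    assert (0 <= Rpower x (p - 2) / p - 1 / 2).
    { assert (Rpower x (p - 2) / p - 1/2 = (Rpower x (p-2) - p / 2) / p) by (field; lra).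
      rewrite H0. apply Rdiv_le_0_compat; lra. }
    assert (0 <= x ^ 2) by apply pow2_ge_0.
    generalize c0_nonneg. nra.
Qed.

Definition GG r := En r + L * c0.
Definition HH r := GG r * exp (2 * Af * r).

Lemma GG_nonneg r : 1 < r < 2 -> 0 <= GG r.
Proof.
  intros Hr. unfold GG. generalize (En_nonneg r Hr) c0_nonneg. intros. nra.
Qed.

Lemma w1sq_le r : 1 < r < 2 -> w1 r ^ 2 <= 2 * GG r.
Proof.
  intros Hr. unfold GG, En. generalize (negff_bound (w r) (Hpos r Hr)). intros. nra.
Qed.

Lemma HH_der r : 1 < r < 2 ->
  is_derive HH r ((- (Af / r) * w1 r ^ 2) * exp (2 * Af * r) + GG r * (2 * Af * exp (2 * Af * r))).
Proof.
  intros Hr. unfold HH.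
  apply (is_derive_mult' GG (fun t => exp (2 * Af * t))).
  - unfold GG. eapply is_derive_eq'. 
    + apply is_derive_plus'. apply En_der, Hr. apply is_derive_const'.
    + apply Rplus_0_r.
  - eapply is_derive_eq'.
    apply (is_derive_comp exp (fun t => 2 * Af * t)). apply is_derive_exp.
    apply (is_derive_ext' (fun t => (2 * Af) * t)). intros t; simpl; lra.
    eapply is_derive_eq'. apply is_derive_scal, is_derive_id'. reflexivity.
    simpl. unfold scal; simpl; unfold mult; simpl. ring.
Qed.

Lemma HH_incr x y : 1 < x -> x <= y -> y < 2 -> HH x <= HH y.
Proof.
  intros H1 H2 H3. apply (incr_lemma HH (fun r => (- (Af / r) * w1 r ^ 2) * exp (2 * Af * r) + GG r * (2 * Af * exp (2 * Af * r)))); auto.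
  - intros r Hr. apply HH_der. lra.
  - intros r Hr. eapply is_derive_cont. apply HH_der. lra.
  - intros r Hr. assert (Hr' : 1 < r < 2) by lra.
    generalize (w1sq_le r Hr') Af_ge1 (exp_pos (2 * Af * r)) (pow2_ge_0 (w1 r)). intros.
    assert (Af / r <= Af).
    { apply (Rmult_le_reg_r r); [lra|]. unfold Rdiv. rewrite Rmult_assoc, Rinv_l by lra. nra. }
    assert (0 <= Af / r) by (apply Rdiv_le_0_compat; lra).
    assert (Af / r * w1 r ^ 2 <= 2 * Af * GG r) by nra.
    nra.
Qed.

Lemma beta_ge1 : 1 <= beta.
Proof.
  unfold beta. rewrite <- exp_0. destruct (Req_dec (2 * Af) 0).
  - rewrite H. lra.
  - apply Rlt_le, exp_increasing. generalize Af_ge1; lra.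
Qed.

Lemma GG_le r : 1 < r < 2 -> GG r <= beta * GG r0.
Proof.
  intros Hr. destruct (Rle_lt_dec r r0) as [Hle|Hlt].
  - generalize (HH_incr r r0 (proj1 Hr) Hle (proj2 Hr0)). unfold HH. intros HH1.
    assert (E : exp (2 * Af * r0) = exp (2 * Af * (r0 - r)) * exp (2 * Af * r)).
    { rewrite <- exp_plus. f_equal. ring. }
    rewrite E in HH1.
    assert (exp (2 * Af * (r0 - r)) <= beta).
    { unfold beta. destruct (Req_dec (2 * Af * (r0 - r)) (2 * Af)) as [e|e]; [rewrite e; lra|].
      apply Rlt_le, exp_increasing. generalize Af_ge1; nra. }
    generalize (exp_pos (2 * Af * r)) (GG_nonneg r0 Hr0). intros.
    assert (GG r <= exp (2 * Af * (r0 - r)) * GG r0).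
    { apply (Rmult_le_reg_r (exp (2 * Af * r))); auto. nra. }
    nra.
  - assert (En r <= En r0) by (apply En_decr; lra). unfold GG in *.
    generalize beta_ge1 (GG_nonneg r0 Hr0). unfold GG. intros. nra.
Qed.

Lemma GG_ge r : r0 <= r < 2 -> GG r0 <= beta * GG r.
Proof.
  intros Hr. generalize (HH_incr r0 r (proj1 Hr0) (proj1 Hr) (proj2 Hr)). unfold HH. intros HH1.
  assert (E : exp (2 * Af * r) = exp (2 * Af * (r - r0)) * exp (2 * Af * r0)).
  { rewrite <- exp_plus. f_equal. ring. }
  rewrite E in HH1.
  assert (exp (2 * Af * (r - r0)) <= beta).
  { unfold beta. destruct (Req_dec (2 * Af * (r - r0)) (2 * Af)) as [e|e]; [rewrite e; lra|].
    apply Rlt_le, exp_increasing. generalize Af_ge1; nra. }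
  generalize (exp_pos (2 * Af * r0)) (GG_nonneg r (conj (Rlt_le_trans _ _ _ (proj1 Hr0) (proj1 Hr)) (proj2 Hr))). intros.
  assert (GG r0 <= exp (2 * Af * (r - r0)) * GG r).
  { apply (Rmult_le_reg_r (exp (2 * Af * r0))); auto. nra. }
  nra.
Qed.

Lemma w1_bound r : 1 < r < 2 -> w1 r ^ 2 <= 2 * beta * GG r0.
Proof.
  intros Hr. generalize (w1sq_le r Hr) (GG_le r Hr). lra.
Qed.

Lemma w_mono_rise x y : 1 <= x -> x <= y -> y <= r0 -> w x <= w y.
Proof.
  intros H1 H2 H3. apply (incr_lemma w w1); [lra| | |].
  - intros r Hr. apply Hd1. lra.
  - intros r _. apply Hc.
  - intros r Hr. apply Rlt_le, rise. lra.
Qed.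

Lemma w_mono_fall x y : r0 <= x -> x <= y -> y <= 2 -> w y <= w x.
Proof.
  intros H1 H2 H3. apply (decr_lemma w w1); [lra| | |].
  - intros r Hr. apply Hd1. lra.
  - intros r _. apply Hc.
  - intros r Hr. apply Rlt_le, fall. lra.
Qed.

Lemma thr_a th : 0 < th < w r0 -> exists a, 1 < a < r0 /\ w a = th /\ (forall x, 1 <= x <= a -> w x <= th) /\ (forall x, a <= x <= r0 -> th <= w x).
Proof.
  intros Hth. destruct (IVT_gen w 1 r0 th Hc) as [a [Ha1 Ha2]].
  { rewrite Hw1, Rmin_left, Rmax_right; lra. }
  rewrite Rmin_left, Rmax_right in Ha1 by lra.
  assert (a <> 1) by (intro e; rewrite e, Hw1 in Ha2; lra).
  assert (a <> r0) by (intro e; rewrite e in Ha2; lra).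
  exists a. split; [lra|]. split; auto. split.
  - intros x Hx. rewrite <- Ha2. apply w_mono_rise; lra.
  - intros x Hx. rewrite <- Ha2. apply w_mono_rise; lra.
Qed.

Lemma thr_b th : 0 < th < w r0 -> exists b, r0 < b < 2 /\ w b = th /\ (forall x, b <= x <= 2 -> w x <= th) /\ (forall x, r0 <= x <= b -> th <= w x).
Proof.
  intros Hth. destruct (IVT_gen w r0 2 th Hc) as [b [Hb1 Hb2]].
  { rewrite Hw2, Rmin_right, Rmax_left; lra. }
  rewrite Rmin_left, Rmax_right in Hb1 by lra.
  assert (b <> 2) by (intro e; rewrite e, Hw2 in Hb2; lra).
  assert (b <> r0) by (intro e; rewrite e in Hb2; lra).
  exists b. split; [lra|]. split; auto. split.
  - intros x Hx. rewrite <- Hb2. apply w_mono_fall; lra.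
  - intros x Hx. rewrite <- Hb2. apply w_mono_fall; lra.
Qed.


Lemma dec_sub x th : 1 <= th -> th <= x -> x - Rpower x (p - 1) <= th - Rpower th (p - 1).
Proof.
  intros H1 H2. replace (p - 1) with (1 + (p - 2)) by ring.
  rewrite !Rpower_split1 by lra.
  assert (Rpower th (p - 2) <= Rpower x (p - 2)) by (apply Rle_Rpower_l; lra).
  assert (1 <= Rpower th (p - 2)) by (apply Rpower_ge1; lra).
  nra.
Qed.

Definition gfun r := r ^ (N - 1) * w1 r.

Lemma g_der r : 1 < r < 2 -> is_derive gfun r (r ^ (N - 1) * (L * (w r - Rpower (w r) (p - 1)))).
Proof.
  intros Hr. unfold gfun. eapply is_derive_eq'.
  apply (is_derive_mult' (fun t => t ^ (N - 1)) w1).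
  apply is_derive_pow, is_derive_id'. apply Hd2, Hr.
  rewrite Heq by auto.
  destruct N as [|[|n]]; [lia| lia|].
  replace (S (S n) - 1)%nat with (S n) by lia. simpl pred.
  rewrite !S_INR. simpl. field. lra.
Qed.

Lemma gap_ba th a b : 1 < th -> 1 < a -> a < b -> b < 2 -> (forall x, a <= x <= b -> th <= w x) ->
  (b - a) * (L * (Rpower th (p - 1) - th)) <= 2 ^ (N - 1) * (Rabs (w1 a) + Rabs (w1 b)).
Proof.
  intros Hth Ha Hab Hb Hw.
  destruct (mvt_strict gfun (fun r => r ^ (N - 1) * (L * (w r - Rpower (w r) (p - 1)))) a b) as [c [Hc1 Hc2]]; auto.
  - intros x Hx. apply g_der. lra.
  - intros x Hx. eapply is_derive_cont. apply g_der. lra.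
  - assert (Hd : w c - Rpower (w c) (p - 1) <= th - Rpower th (p - 1)) by (apply dec_sub; [lra| apply Hw; lra]).
    assert (Hneg : th - Rpower th (p - 1) <= 0).
    { replace (p - 1) with (1 + (p - 2)) by ring. rewrite Rpower_split1 by lra.
      assert (1 <= Rpower th (p - 2)) by (apply Rpower_ge1; lra). nra. }
    assert (Hc1' : 1 <= c ^ (N - 1)) by (apply pow_R1_Rle; lra).
    assert (Hgc : c ^ (N - 1) * (L * (w c - Rpower (w c) (p - 1))) <= L * (th - Rpower th (p - 1))).
    { assert (L * (w c - Rpower (w c) (p - 1)) <= L * (th - Rpower th (p - 1))) by (apply Rmult_le_compat_l; lra).
      assert (L * (th - Rpower th (p - 1)) <= 0) by nra. nra. }
    assert (Hga : gfun a <= 2 ^ (N - 1) * Rabs (w1 a)).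
    { unfold gfun. assert (a ^ (N - 1) <= 2 ^ (N - 1)) by (apply pow_incr; lra).
      assert (0 <= a ^ (N-1)) by (apply pow_le; lra).
      assert (w1 a <= Rabs (w1 a)) by apply Rle_abs. assert (0 <= Rabs (w1 a)) by apply Rabs_pos. nra. }
    assert (Hgb : - (2 ^ (N - 1) * Rabs (w1 b)) <= gfun b).
    { unfold gfun. assert (b ^ (N - 1) <= 2 ^ (N - 1)) by (apply pow_incr; lra).
      assert (0 <= b ^ (N-1)) by (apply pow_le; lra).
      assert (- Rabs (w1 b) <= w1 b) by (generalize (Rabs_pos (w1 b)) (Rle_abs (- w1 b)); rewrite Rabs_Ropp; lra).
      assert (0 <= Rabs (w1 b)) by apply Rabs_pos. nra. }
    nra.
Qed.

Lemma abs_w1_bound r : 1 < r < 2 -> Rabs (w1 r) <= sqrt (2 * beta * GG r0).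
Proof.
  intros Hr. rewrite <- sqrt_Rsqr_abs. apply sqrt_le_1_alt.
  unfold Rsqr. generalize (w1_bound r Hr). simpl. lra.
Qed.

Lemma w_nonneg r : 1 <= r <= 2 -> 0 <= w r.
Proof.
  intros Hr. destruct (Req_dec r 1) as [->|H1]; [lra|].
  destruct (Req_dec r 2) as [->|H2]; [lra|]. apply Rlt_le, Hpos. lra.
Qed.

Lemma decay_left a s : 1 < a <= r0 -> 0 < s -> (forall x, 1 < x < a -> s * w x <= w1 x) ->
  forall r, 1 <= r <= a -> w r <= w a * exp (s * (r - a)).
Proof.
  intros Ha Hs Hsp r Hr.
  assert (Hh : w r * exp (- s * r) <= w a * exp (- s * a)).
  { apply (incr_lemma (fun t => w t * exp (- s * t)) (fun t => (w1 t - s * w t) * exp (- s * t))); [lra| | |].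
    - intros x Hx. eapply is_derive_eq'.
      apply (is_derive_mult' w (fun t => exp (- s * t))). apply Hd1; lra.
      apply (is_derive_ext' (fun t => exp (- s * (t - 0)))). intros t; f_equal; ring.
      apply is_derive_exp_lin. toR. rewrite Rminus_0_r. ring.
    - intros x _. apply cont_mult_exp, Hc.
    - intros x Hx. apply Rmult_le_pos; [| apply Rlt_le, exp_pos]. assert (Hx2 : 1 < x < a) by lra. generalize (Hsp x Hx2); lra. }
  assert (E : exp (s * (r - a)) = exp (- s * a) / exp (- s * r)).
  { unfold Rdiv. rewrite <- exp_Ropp, <- exp_plus. f_equal. ring. }
  rewrite E. generalize (exp_pos (- s * r)). intros.
  apply (Rmult_le_reg_r (exp (- s * r))); auto.
  unfold Rdiv. rewrite Rmult_assoc, (Rmult_assoc (exp (- s * a))), Rinv_l by lra. lra.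
Qed.

Lemma decay_right b s : r0 <= b < 2 -> 0 < s -> (forall x, b < x < 2 -> w1 x <= - s * w x) ->
  forall r, b <= r <= 2 -> w r <= w b * exp (- s * (r - b)).
Proof.
  intros Hb Hs Hsp r Hr.
  assert (Hh : w r * exp (s * r) <= w b * exp (s * b)).
  { apply (decr_lemma (fun t => w t * exp (s * t)) (fun t => (w1 t + s * w t) * exp (s * t))); [lra| | |].
    - intros x Hx. eapply is_derive_eq'.
      apply (is_derive_mult' w (fun t => exp (s * t))). apply Hd1; lra.
      apply (is_derive_ext' (fun t => exp (s * (t - 0)))). intros t; f_equal; ring.
      apply is_derive_exp_lin. toR. rewrite Rminus_0_r. ring.
    - intros x _. apply cont_mult_exp, Hc.
    - intros x Hx. assert (Hx2 : b < x < 2) by lra. assert (w1 x + s * w x <= 0) by (generalize (Hsp x Hx2); lra).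
      generalize (exp_pos (s * x)). nra. }
  assert (E : exp (- s * (r - b)) = exp (s * b) / exp (s * r)).
  { unfold Rdiv. rewrite <- exp_Ropp, <- exp_plus. f_equal. ring. }
  rewrite E. generalize (exp_pos (s * r)). intros.
  apply (Rmult_le_reg_r (exp (s * r))); auto.
  unfold Rdiv. rewrite Rmult_assoc, (Rmult_assoc (exp (s * b))), Rinv_l by lra. lra.
Qed.

Definition Iw r := w r ^ 2 * r ^ (N - 1).

Lemma Iw_cont r : continuity_pt Iw r.
Proof.
  unfold Iw. apply (continuity_pt_mult (fun t => w t ^ 2) (fun t => t ^ (N - 1))).
  - apply (continuity_pt_comp w (fun y => y ^ 2)). apply Hc.
    apply derivable_continuous_pt, derivable_pt_pow.
  - apply derivable_continuous_pt, derivable_pt_pow.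
Qed.

Lemma Iw_ex a b : ex_RInt Iw a b.
Proof.
  apply (ex_RInt_continuous (V := R_CompleteNormedModule)). intros z _. apply continuity_pt_filterlim, Iw_cont.
Qed.


Lemma exp_sq x : exp x ^ 2 = exp (2 * x).
Proof. simpl. rewrite Rmult_1_r, <- exp_plus. f_equal. ring. Qed.

Lemma int_left a s : 1 < a <= r0 -> 0 < s -> (forall x, 1 < x < a -> s * w x <= w1 x) ->
  RInt Iw 1 a <= 2 ^ (N - 1) * w a ^ 2 / (2 * s).
Proof.
  intros Ha Hs Hsp.
  assert (Hex : ex_RInt (fun r => exp (2 * s * (r - a))) 1 a).
  { apply (ex_RInt_continuous (V := R_CompleteNormedModule)). intros z _. apply continuity_pt_filterlim.
    eapply is_derive_cont. apply is_derive_exp_lin. }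
  assert (H1 : RInt Iw 1 a <= RInt (fun r => (2 ^ (N - 1) * w a ^ 2) * exp (2 * s * (r - a))) 1 a).
  { apply RInt_le; [lra| apply Iw_ex| |].
    - apply (ex_RInt_scal (V := R_NormedModule) (fun r => exp (2 * s * (r - a))) 1 a _ Hex).
    - intros x Hx. unfold Iw.
      assert (Hwx : w x <= w a * exp (s * (x - a))) by (apply (decay_left a s); auto; lra).
      assert (0 <= w x) by (apply w_nonneg; lra).
      assert (w x ^ 2 <= (w a * exp (s * (x - a))) ^ 2) by (apply pow_incr; lra).
      rewrite Rpow_mult_distr, exp_sq in H0.
      replace (2 * (s * (x - a))) with (2 * s * (x - a)) in H0 by ring.
      assert (x ^ (N - 1) <= 2 ^ (N - 1)) by (apply pow_incr; lra).
      assert (0 <= x ^ (N - 1)) by (apply pow_le; lra).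
      assert (0 <= w x ^ 2) by apply pow2_ge_0.
      assert (0 < exp (2 * s * (x - a))) by apply exp_pos.
      assert (0 <= w a ^ 2) by apply pow2_ge_0.
      assert (0 <= 2 ^ (N-1)) by (apply pow_le; lra).
      replace (2 ^ (N - 1) * w a ^ 2 * exp (2 * s * (x - a))) with ((w a ^ 2 * exp (2 * s * (x - a))) * 2 ^ (N - 1)) by ring.
      apply Rmult_le_compat; auto. }
  rewrite (RInt_scal (V := R_CompleteNormedModule) (fun r => exp (2 * s * (r - a))) 1 a _ Hex) in H1.
  unfold scal in H1; simpl in H1; unfold mult in H1; simpl in H1.
  generalize (RInt_exp_left s 1 a Hs (Rlt_le _ _ (proj1 Ha))). intros H2.
  assert (0 <= 2 ^ (N - 1) * w a ^ 2) by (apply Rmult_le_pos; [apply pow_le; lra| apply pow2_ge_0]).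
  assert (2 ^ (N - 1) * w a ^ 2 * RInt (fun r => exp (2 * s * (r - a))) 1 a <= 2 ^ (N - 1) * w a ^ 2 * (1 / (2 * s)))
    by (apply Rmult_le_compat_l; auto).
  replace (2 ^ (N - 1) * w a ^ 2 / (2 * s)) with (2 ^ (N - 1) * w a ^ 2 * (1 / (2 * s))) by (field; lra).
  lra.
Qed.

Lemma int_right b s : r0 <= b < 2 -> 0 < s -> (forall x, b < x < 2 -> w1 x <= - s * w x) ->
  RInt Iw b 2 <= 2 ^ (N - 1) * w b ^ 2 / (2 * s).
Proof.
  intros Hb Hs Hsp.
  assert (Hex : ex_RInt (fun r => exp (- (2 * s) * (r - b))) b 2).
  { apply (ex_RInt_continuous (V := R_CompleteNormedModule)). intros z _. apply continuity_pt_filterlim.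
    eapply is_derive_cont. apply is_derive_exp_lin. }
  assert (H1 : RInt Iw b 2 <= RInt (fun r => (2 ^ (N - 1) * w b ^ 2) * exp (- (2 * s) * (r - b))) b 2).
  { apply RInt_le; [lra| apply Iw_ex| |].
    - apply (ex_RInt_scal (V := R_NormedModule) (fun r => exp (- (2 * s) * (r - b))) b 2 _ Hex).
    - intros x Hx. unfold Iw.
      assert (Hwx : w x <= w b * exp (- s * (x - b))) by (apply (decay_right b s); auto; lra).
      assert (0 <= w x) by (apply w_nonneg; lra).
      assert (w x ^ 2 <= (w b * exp (- s * (x - b))) ^ 2) by (apply pow_incr; lra).
      rewrite Rpow_mult_distr, exp_sq in H0.
      replace (2 * (- s * (x - b))) with (- (2 * s) * (x - b)) in H0 by ring.
      assert (x ^ (N - 1) <= 2 ^ (N - 1)) by (apply pow_incr; lra).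
      assert (0 <= x ^ (N - 1)) by (apply pow_le; lra).
      assert (0 <= w x ^ 2) by apply pow2_ge_0.
      assert (0 < exp (- (2 * s) * (x - b))) by apply exp_pos.
      assert (0 <= w b ^ 2) by apply pow2_ge_0.
      assert (0 <= 2 ^ (N-1)) by (apply pow_le; lra).
      replace (2 ^ (N - 1) * w b ^ 2 * exp (- (2 * s) * (x - b))) with ((w b ^ 2 * exp (- (2 * s) * (x - b))) * 2 ^ (N - 1)) by ring.
      apply Rmult_le_compat; auto. }
  rewrite (RInt_scal (V := R_CompleteNormedModule) (fun r => exp (- (2 * s) * (r - b))) b 2 _ Hex) in H1.
  unfold scal in H1; simpl in H1; unfold mult in H1; simpl in H1.
  generalize (RInt_exp_right s b 2 Hs (Rlt_le _ _ (proj2 Hb))). intros H2.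
  assert (0 <= 2 ^ (N - 1) * w b ^ 2) by (apply Rmult_le_pos; [apply pow_le; lra| apply pow2_ge_0]).
  assert (2 ^ (N - 1) * w b ^ 2 * RInt (fun r => exp (- (2 * s) * (r - b))) b 2 <= 2 ^ (N - 1) * w b ^ 2 * (1 / (2 * s)))
    by (apply Rmult_le_compat_l; auto).
  replace (2 ^ (N - 1) * w b ^ 2 / (2 * s)) with (2 ^ (N - 1) * w b ^ 2 * (1 / (2 * s))) by (field; lra).
  lra.
Qed.

Lemma int_mid a b : 1 <= a -> a <= b -> b <= 2 -> RInt Iw a b <= 2 ^ (N - 1) * w r0 ^ 2 * (b - a).
Proof.
  intros H1 H2 H3. apply RInt_le_const; auto. apply Iw_ex.
  intros x Hx. unfold Iw.
  assert (0 <= w x) by (apply w_nonneg; lra).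
  assert (w x <= w r0) by (apply Hmax; lra).
  assert (w x ^ 2 <= w r0 ^ 2) by (apply pow_incr; lra).
  assert (x ^ (N - 1) <= 2 ^ (N - 1)) by (apply pow_incr; lra).
  assert (0 <= x ^ (N - 1)) by (apply pow_le; lra).
  assert (0 <= w x ^ 2) by apply pow2_ge_0.
  assert (0 <= 2 ^ (N-1)) by (apply pow_le; lra).
  replace (2 ^ (N - 1) * w r0 ^ 2) with (w r0 ^ 2 * 2 ^ (N - 1)) by ring.
  apply Rmult_le_compat; auto.
Qed.

Lemma int_split a b : RInt Iw 1 2 = RInt Iw 1 a + RInt Iw a b + RInt Iw b 2.
Proof.
  rewrite <- (RInt_Chasles Iw 1 b 2) by apply Iw_ex.
  rewrite <- (RInt_Chasles Iw 1 a b) by apply Iw_ex. reflexivity.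
Qed.


Definition k1 := Rpower (1 + (p - 2) / 4) (/ (p - 2)).
Definition sg := sqrt ((p - 2) / (2 * p)).
Definition Dk := Rpower k1 (p - 1) - k1.
Definition Kb Wb := sqrt (2 * beta * (Rpower Wb p / p + c0)).
Definition CA Wb := 2 ^ (N - 1) * k1 ^ 2 / sg + 2 ^ (N - 1) * Wb ^ 2 * (2 ^ N * Kb Wb / Dk).

Lemma k1_q : Rpower k1 (p - 2) = 1 + (p - 2) / 4.
Proof. apply Rpower_inv_e; lra. Qed.

Lemma k1_gt1 : 1 < k1.
Proof. apply (Rpower_gt1_base _ (p - 2)); [apply Rpower_pos| lra| rewrite k1_q; lra]. Qed.

Lemma Dk_pos : 0 < Dk.
Proof.
  unfold Dk. replace (p - 1) with (1 + (p - 2)) by ring. rewrite Rpower_split1 by (generalize k1_gt1; lra).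
  rewrite k1_q. generalize k1_gt1. intros. nra.
Qed.

Lemma sg_pos : 0 < sg.
Proof. apply sqrt_lt_R0. apply Rdiv_lt_0_compat; lra. Qed.

Lemma GG_r0 : GG r0 = L * (ff (w r0) + c0).
Proof. unfold GG, En. rewrite w1_r0. field. Qed.

Lemma ff_le_pow x : ff x <= Rpower x p / p.
Proof. unfold ff. assert (0 <= x ^ 2) by apply pow2_ge_0. lra. Qed.

Lemma regimeA Wb : w r0 <= Wb -> RInt Iw 1 2 <= CA Wb / sqrt L.
Proof.
  intros HWb.
  assert (HW := W_pos). assert (HWq := W_big).
  assert (Hk1 := k1_gt1).
  assert (Hk1W : k1 < w r0).
  { apply (Rpower_lt_base _ _ (p - 2)); try lra. rewrite k1_q. lra. }
  set (sL := sqrt L).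
  assert (HsL : 0 < sL) by (apply sqrt_lt_R0; lra).
  assert (HsL2 : sL * sL = L) by (apply sqrt_sqrt; lra).
  assert (Hsg := sg_pos).
  assert (Hsg2 : sg * sg = (p - 2) / (2 * p)) by (apply sqrt_sqrt; apply Rlt_le, Rdiv_lt_0_compat; lra).
  set (sig := sL * sg).
  assert (Hsig : 0 < sig) by (unfold sig; nra).
  assert (Hspeed : forall x, 1 < x < 2 -> w x <= k1 -> (sig * w x) ^ 2 <= w1 x ^ 2).
  { intros x Hx Hwx. assert (Hw0 : 0 < w x) by (apply Hpos; auto).
    generalize (En_nonneg x Hx). unfold En. rewrite ff_eq by auto. intros HE.
    assert (Rpower (w x) (p - 2) <= 1 + (p - 2) / 4) by (rewrite <- k1_q; apply Rle_Rpower_l; lra).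
    assert (Rpower (w x) (p - 2) / p - 1 / 2 <= - ((p - 2) / (4 * p))).
    { assert (Rpower (w x) (p - 2) / p <= (1 + (p - 2) / 4) / p) by (apply Rmult_le_compat_r; [apply Rlt_le, Rinv_0_lt_compat; lra| auto]).
      assert ((1 + (p - 2) / 4) / p - 1 / 2 = - ((p - 2) / (4 * p))) by (field; lra). lra. }
    assert (0 < w x ^ 2) by (apply pow_lt; auto).
    assert (w x ^ 2 * (Rpower (w x) (p - 2) / p - 1 / 2) <= w x ^ 2 * (- ((p - 2) / (4 * p)))) by (apply Rmult_le_compat_l; lra).
    assert (E1 : (sig * w x) ^ 2 = L * w x ^ 2 * ((p - 2) / (2 * p))).
    { unfold sig. replace ((sL * sg * w x) ^ 2) with ((sL * sL) * (sg * sg) * w x ^ 2) by ring.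
      rewrite HsL2, Hsg2. ring. }
    rewrite E1.
    assert (L * (w x ^ 2 * (Rpower (w x) (p - 2) / p - 1 / 2)) <= L * (w x ^ 2 * (- ((p - 2) / (4 * p))))) by (apply Rmult_le_compat_l; lra).
    assert (L * (w x ^ 2 * - ((p - 2) / (4 * p))) = - (L * w x ^ 2 * ((p - 2) / (2 * p))) / 2) by (field; lra).
    lra. }
  destruct (thr_a k1) as [a [Ha1 [Ha2 [Ha3 Ha4]]]]; [lra|].
  destruct (thr_b k1) as [b [Hb1 [Hb2 [Hb3 Hb4]]]]; [lra|].
  assert (HL1 : RInt Iw 1 a <= 2 ^ (N - 1) * k1 ^ 2 / (2 * sig)).
  { rewrite <- Ha2. apply int_left; [lra| auto|].
    intros x Hx. assert (Hx2 : 1 < x < 2) by lra.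
    generalize (Hspeed x Hx2 (Ha3 x (conj (Rlt_le _ _ (proj1 Hx)) (Rlt_le _ _ (proj2 Hx))))).
    assert (0 < w1 x) by (apply rise; lra). assert (0 < w x) by (apply Hpos; auto).
    intros Hsq. destruct (Rle_lt_dec (sig * w x) (w1 x)) as [|Hlt]; auto.
    assert (w1 x ^ 2 < (sig * w x) ^ 2) by nra. lra. }
  assert (HL2 : RInt Iw b 2 <= 2 ^ (N - 1) * k1 ^ 2 / (2 * sig)).
  { rewrite <- Hb2. apply int_right; [lra| auto|].
    intros x Hx. assert (Hx2 : 1 < x < 2) by lra.
    generalize (Hspeed x Hx2 (Hb3 x (conj (Rlt_le _ _ (proj1 Hx)) (Rlt_le _ _ (proj2 Hx))))).
    assert (w1 x < 0) by (apply fall; lra). assert (0 < w x) by (apply Hpos; auto).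
    intros Hsq. destruct (Rle_lt_dec (w1 x) (- sig * w x)) as [|Hlt]; auto.
    assert ((- w1 x) ^ 2 < (sig * w x) ^ 2) by nra.
    replace ((- w1 x) ^ 2) with (w1 x ^ 2) in H1 by ring. lra. }
  assert (HKb : sqrt (2 * beta * GG r0) <= sL * Kb Wb).
  { unfold sL, Kb. rewrite <- sqrt_mult_alt by lra. apply sqrt_le_1_alt.
    rewrite GG_r0. generalize beta_ge1 c0_nonneg. intros.
    assert (ff (w r0) <= Rpower Wb p / p).
    { eapply Rle_trans; [apply ff_le_pow|]. apply Rmult_le_compat_r; [apply Rlt_le, Rinv_0_lt_compat; lra|].
      apply Rle_Rpower_l; lra. }
    assert (0 <= 2 * beta) by lra.
    assert (ff (w r0) + c0 <= Rpower Wb p / p + c0) by lra.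
    replace (2 * beta * (L * (ff (w r0) + c0))) with ((2 * beta * L) * (ff (w r0) + c0)) by ring.
    replace (L * (2 * beta * (Rpower Wb p / p + c0))) with ((2 * beta * L) * (Rpower Wb p / p + c0)) by ring.
    apply Rmult_le_compat_l; [nra| auto]. }
  assert (Hgap := gap_ba k1 a b Hk1 (proj1 Ha1) (Rlt_trans _ _ _ (proj2 Ha1) (proj1 Hb1)) (proj2 Hb1)).
  assert (Hgap' : (b - a) * (L * Dk) <= 2 ^ N * (sL * Kb Wb)).
  { unfold Dk. eapply Rle_trans; [apply Hgap|].
    - intros x Hx. destruct (Rle_lt_dec x r0).
      + apply Ha4; lra.
      + apply Hb4; lra.
    - assert (Rabs (w1 a) <= sL * Kb Wb) by (eapply Rle_trans; [apply abs_w1_bound; lra| auto]).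
      assert (Rabs (w1 b) <= sL * Kb Wb) by (eapply Rle_trans; [apply abs_w1_bound; lra| auto]).
      replace (2 ^ N) with (2 ^ (N - 1) * 2).
      + assert (0 <= 2 ^ (N - 1)) by (apply pow_le; lra). nra.
      + replace N with (S (N - 1)) at 2 by lia. simpl. ring. }
  assert (HDk := Dk_pos).
  assert (Hba : b - a <= 2 ^ N * Kb Wb / Dk / sL).
  { apply (Rmult_le_reg_r (L * Dk)); [nra|].
    replace (2 ^ N * Kb Wb / Dk / sL * (L * Dk)) with (2 ^ N * (sL * Kb Wb)) by (rewrite <- HsL2; field; lra).
    auto. }
  assert (HM : RInt Iw a b <= 2 ^ (N - 1) * Wb ^ 2 * (2 ^ N * Kb Wb / Dk / sL)).
  { eapply Rle_trans; [apply int_mid; lra|].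
    assert (0 <= 2 ^ (N - 1)) by (apply pow_le; lra).
    assert (w r0 ^ 2 <= Wb ^ 2) by (apply pow_incr; lra).
    apply Rmult_le_compat; try lra.
    - apply Rmult_le_pos; [lra| apply pow2_ge_0].
    - apply Rmult_le_compat_l; lra. }
  rewrite (int_split a b).
  assert (E : CA Wb / sL = 2 ^ (N - 1) * k1 ^ 2 / (2 * sig) + 2 ^ (N - 1) * k1 ^ 2 / (2 * sig) +
     2 ^ (N - 1) * Wb ^ 2 * (2 ^ N * Kb Wb / Dk / sL)).
  { unfold CA, sig. field. lra. }
  fold sL. rewrite E. lra.
Qed.


Definition rho := Rpower (/ (8 * beta)) (/ p).
Definition Zc := p + 2 / Rpower rho (p - 2) + 8 * p * beta * c0 + 1.
Definition Wbar := Rpower Zc (/ (p - 2)).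
Definition KB := 2 * rho * sqrt (2 * p * beta) + 2 ^ (N + 1) * sqrt (4 * beta / p) / Rpower rho (p - 1).

Lemma rho_pos : 0 < rho.
Proof. apply Rpower_pos. Qed.

Lemma rho_p : Rpower rho p = / (8 * beta).
Proof. apply Rpower_inv_e; [| lra]. generalize beta_ge1; intros. apply Rinv_0_lt_compat; lra. Qed.

Lemma rho_lt1 : rho < 1.
Proof.
  unfold rho. apply Rpower_lt1; [| apply Rinv_0_lt_compat; lra].
  generalize beta_ge1; intros. split; [apply Rinv_0_lt_compat; lra|].
  rewrite <- Rinv_1. apply Rinv_lt_contravar; lra.
Qed.

Lemma Zc_ge1 : 1 <= Zc.
Proof.
  unfold Zc. generalize (Rpower_pos rho (p - 2)) beta_ge1 c0_nonneg. intros.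
  assert (0 < 2 / Rpower rho (p - 2)) by (apply Rdiv_lt_0_compat; lra).
  assert (0 <= 8 * p * beta) by (apply Rmult_le_pos; lra).
  assert (0 <= 8 * p * beta * c0) by (apply Rmult_le_pos; lra). lra.
Qed.

Lemma regimeB : Wbar <= w r0 -> sqrt L <= KB.
Proof.
  intros HWb.
  assert (HW := W_pos). assert (HWq := W_big).
  assert (Hb1 := beta_ge1). assert (Hc0 := c0_nonneg).
  assert (Hrho := rho_pos). assert (Hrho1 := rho_lt1).
  assert (HZ := Zc_ge1).
  set (W := w r0) in *.
  assert (HWqZ : Zc <= Rpower W (p - 2)).
  { replace Zc with (Rpower Wbar (p - 2)) by (unfold Wbar; apply Rpower_inv_e; lra).
    apply Rle_Rpower_l; [lra|]. split; [apply Rpower_pos| auto]. }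
  assert (HW1 : 1 <= W).
  { destruct (Rle_lt_dec 1 W) as [|Hlt]; auto.
    assert (Rpower W (p - 2) < 1) by (apply Rpower_lt1; lra). lra. }
  set (X := Rpower W p).
  assert (HX : X = W ^ 2 * Rpower W (p - 2)).
  { unfold X. replace p with (2 + (p - 2)) at 1 by ring. apply Rpower_split; lra. }
  assert (HW2 : 1 <= W ^ 2) by (apply pow_R1_Rle; lra).
  assert (HXq : Rpower W (p - 2) <= X) by (rewrite HX; nra).
  assert (HXW : W ^ 2 <= X) by (rewrite HX; nra).
  assert (HZdef : Zc = p + 2 / Rpower rho (p - 2) + 8 * p * beta * c0 + 1) by reflexivity.
  assert (Hrq : 0 < Rpower rho (p - 2)) by apply Rpower_pos.
  assert (H2r : 0 < 2 / Rpower rho (p - 2)) by (apply Rdiv_lt_0_compat; lra).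
  assert (H8 : 0 <= 8 * p * beta * c0) by (apply Rmult_le_pos; [apply Rmult_le_pos|]; lra).
  assert (Hc0X : 8 * p * beta * c0 <= X) by lra.
  assert (HpX : p <= Rpower W (p - 2)) by lra.
  set (th := rho * W).
  assert (Hthq : 2 <= Rpower th (p - 2)).
  { unfold th. rewrite <- Rpower_mult_distr by lra.
    assert (2 / Rpower rho (p - 2) <= Rpower W (p - 2)) by lra.
    assert (Rpower rho (p - 2) * (2 / Rpower rho (p - 2)) = 2) by (field; lra).
    assert (Rpower rho (p - 2) * (2 / Rpower rho (p - 2)) <= Rpower rho (p - 2) * Rpower W (p - 2))
      by (apply Rmult_le_compat_l; lra). lra. }
  assert (Hth0 : 0 < th) by (unfold th; nra).
  assert (Hth1 : 1 < th) by (apply (Rpower_gt1_base _ (p - 2)); lra).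
  assert (HthW : th < W) by (unfold th; nra).
  assert (Hthp : Rpower th p = X / (8 * beta)).
  { unfold th. rewrite <- Rpower_mult_distr by lra. rewrite rho_p. fold X. field. lra. }
  assert (Hffl : X / (2 * p) <= ff W).
  { rewrite ff_eq by lra. rewrite HX.
    assert (Rpower W (p - 2) / (2 * p) <= Rpower W (p - 2) / p - 1 / 2).
    { assert (Rpower W (p - 2) / p - 1 / 2 - Rpower W (p - 2) / (2 * p) = (Rpower W (p - 2) - p) / (2 * p)) by (field; lra).
      assert (0 <= (Rpower W (p - 2) - p) / (2 * p)) by (apply Rdiv_le_0_compat; lra). lra. }
    assert (Eq1 : W ^ 2 * Rpower W (p - 2) / (2 * p) = W ^ 2 * (Rpower W (p - 2) / (2 * p))) by (field; lra).
    assert (0 <= W ^ 2) by apply pow2_ge_0.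
    rewrite Eq1. apply Rmult_le_compat_l; auto. }
  assert (Hffu : ff W <= X / p) by apply ff_le_pow.
  assert (Hc0b : c0 <= X / (8 * p * beta)).
  { apply (Rmult_le_reg_r (8 * p * beta)); [nra|]. replace (X / (8 * p * beta) * (8 * p * beta)) with X by (field; split; lra). lra. }
  set (sL := sqrt L).
  assert (HsL : 0 < sL) by (apply sqrt_lt_R0; lra).
  assert (HsL2 : sL * sL = L) by (apply sqrt_sqrt; lra).
  set (Y := sqrt X).
  assert (HX0 : 0 < X) by (unfold X; apply Rpower_pos).
  assert (HY : 0 < Y) by (apply sqrt_lt_R0; lra).
  assert (HY2 : Y * Y = X) by (apply sqrt_sqrt; lra).
  assert (HWY : W <= Y).
  { unfold Y. rewrite <- (sqrt_pow2 W) by lra. apply sqrt_le_1_alt. lra. }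
  set (T := sqrt (2 * p * beta)).
  assert (HT : 0 < T) by (apply sqrt_lt_R0; nra).
  assert (HT2 : T * T = 2 * p * beta) by (apply sqrt_sqrt; nra).
  set (Sv := sL * Y / T).
  assert (HS : 0 < Sv) by (unfold Sv; apply Rdiv_lt_0_compat; nra).
  assert (HS2 : Sv * Sv = L * X / (2 * p * beta)).
  { unfold Sv. rewrite <- HsL2, <- HY2, <- HT2. field. lra. }
  assert (Hffs : forall x, 1 < x < 2 -> w x <= th -> ff (w x) <= X / (8 * p * beta)).
  { intros x Hx Hwx. eapply Rle_trans; [apply ff_le_pow|].
    assert (Rpower (w x) p <= Rpower th p) by (apply Rle_Rpower_l; [lra| split; [apply Hpos; auto| auto]]).
    rewrite Hthp in H. replace (X / (8 * p * beta)) with (X / (8 * beta) / p) by (field; split; lra).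
    apply Rmult_le_compat_r; [apply Rlt_le, Rinv_0_lt_compat; lra| auto]. }
  destruct (thr_a th) as [a [Ha1 [Ha2 [Ha3 Ha4]]]]; [split; [lra| exact HthW]|].
  destruct (thr_b th) as [b [Hb1' [Hb2 [Hb3 Hb4]]]]; [split; [lra| exact HthW]|].
  assert (HXp : 0 < X / (8 * p * beta)) by (apply Rdiv_lt_0_compat; nra).
  assert (HE1 : X / (8 * p * beta) * 4 <= X / (2 * p)).
  { replace (X / (8 * p * beta) * 4) with (X / (2 * p) / beta) by (field; split; lra).
    assert (0 < X / (2 * p)) by (apply Rdiv_lt_0_compat; lra).
    apply (Rmult_le_reg_r beta); [lra|]. replace (X / (2 * p) / beta * beta) with (X / (2 * p)) by (field; lra). nra. }
  assert (Hrise : forall x, 1 < x < a -> Sv <= w1 x).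
  { intros x Hx. assert (Hx2 : 1 < x < 2) by lra.
    assert (Hwx : w x <= th) by (apply Ha3; lra).
    assert (HEx : En r0 <= En x) by (apply En_decr; lra).
    assert (HEr0 : En r0 = L * ff W) by (unfold En; rewrite w1_r0; fold W; field).
    assert (Hsq : Sv * Sv <= w1 x ^ 2).
    { rewrite HS2. generalize (Hffs x Hx2 Hwx). intros Hf.
      assert (w1 x ^ 2 = 2 * (En x - L * ff (w x))) by (unfold En; field).
      rewrite H.
      assert (L * ff (w x) <= L * (X / (8 * p * beta))) by (apply Rmult_le_compat_l; lra).
      assert (L * (X / (2 * p)) <= L * ff W) by (apply Rmult_le_compat_l; lra).
      assert (L * (X / (8 * p * beta)) * 4 <= L * (X / (2 * p))) by (rewrite Rmult_assoc; apply Rmult_le_compat_l; lra).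
      replace (L * X / (2 * p * beta)) with (L * (X / (8 * p * beta)) * 4) by (field; split; lra).
      nra. }
    assert (0 < w1 x) by (apply rise; lra).
    destruct (Rle_lt_dec Sv (w1 x)) as [|Hlt]; auto. nra. }
  assert (Hfall : forall x, b < x < 2 -> w1 x <= - Sv).
  { intros x Hx. assert (Hx2 : 1 < x < 2) by lra.
    assert (Hwx : w x <= th) by (apply Hb3; lra).
    assert (HG : GG r0 <= beta * GG x) by (apply GG_ge; lra).
    rewrite GG_r0 in HG. fold W in HG.
    assert (Hsq : Sv * Sv <= w1 x ^ 2).
    { rewrite HS2. generalize (Hffs x Hx2 Hwx). intros Hf.
      assert (w1 x ^ 2 = 2 * (GG x - L * c0 - L * ff (w x))) by (unfold GG, En; field).
      rewrite H.
      assert (L * ff (w x) <= L * (X / (8 * p * beta))) by (apply Rmult_le_compat_l; lra).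
      assert (L * c0 <= L * (X / (8 * p * beta))) by (apply Rmult_le_compat_l; lra).
      assert (HGx : L * (ff W + c0) / beta <= GG x).
      { apply (Rmult_le_reg_r beta); [lra|]. replace (L * (ff W + c0) / beta * beta) with (L * (ff W + c0)) by (field; lra). lra. }
      assert (L * (X / (2 * p)) / beta <= L * (ff W + c0) / beta).
      { apply Rmult_le_compat_r; [apply Rlt_le, Rinv_0_lt_compat; lra|]. apply Rmult_le_compat_l; lra. }
      replace (L * (X / (2 * p)) / beta) with (L * (X / (8 * p * beta)) * 4) in H2 by (field; split; lra).
      replace (L * X / (2 * p * beta)) with (L * (X / (8 * p * beta)) * 4) by (field; split; lra).
      lra. }
    assert (w1 x < 0) by (apply fall; lra).
    destruct (Rle_lt_dec (w1 x) (- Sv)) as [|Hlt]; auto. nra. }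
  assert (Hla : a - 1 <= th / Sv).
  { destruct (mvt_strict w w1 1 a) as [c [Hc1 Hc2]]; [lra| intros; apply Hd1; lra| intros; apply Hc|].
    rewrite Ha2, Hw1 in Hc2. assert (Sv <= w1 c) by (apply Hrise; lra).
    apply (Rmult_le_reg_r Sv); auto. replace (th / Sv * Sv) with th by (field; lra). nra. }
  assert (Hlb : 2 - b <= th / Sv).
  { destruct (mvt_strict w w1 b 2) as [c [Hc1 Hc2]]; [lra| intros; apply Hd1; lra| intros; apply Hc|].
    rewrite Hb2, Hw2 in Hc2. assert (w1 c <= - Sv) by (apply Hfall; lra).
    apply (Rmult_le_reg_r Sv); auto. replace (th / Sv * Sv) with th by (field; lra). nra. }
  assert (HthS : th / Sv <= rho * T / sL).
  { unfold Sv, th. replace (rho * W / (sL * Y / T)) with ((rho * T / sL) * (W / Y)) by (field; lra).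
    assert (W / Y <= 1) by (apply (Rmult_le_reg_r Y); auto; replace (W / Y * Y) with W by (field; lra); lra).
    assert (0 < rho * T / sL) by (apply Rdiv_lt_0_compat; nra). nra. }
  set (U := sqrt (4 * beta / p)).
  assert (HU : 0 < U) by (apply sqrt_lt_R0; apply Rdiv_lt_0_compat; lra).
  assert (HU2 : U * U = 4 * beta / p) by (apply sqrt_sqrt; apply Rlt_le, Rdiv_lt_0_compat; lra).
  assert (Hw1b : forall r, 1 < r < 2 -> Rabs (w1 r) <= sL * U * Y).
  { intros r Hr. eapply Rle_trans; [apply abs_w1_bound; auto|].
    rewrite <- (sqrt_pow2 (sL * U * Y)) by (apply Rmult_le_pos; nra).
    apply sqrt_le_1_alt. rewrite GG_r0. fold W.
    replace ((sL * U * Y) ^ 2) with ((sL * sL) * (U * U) * (Y * Y)) by ring.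
    rewrite HsL2, HU2, HY2.
    assert (ff W + c0 <= 2 * X / p).
    { assert (X / (8 * p * beta) <= X / p).
      { apply Rmult_le_compat_l; [lra|]. apply Rinv_le_contravar; [lra| nra]. }
      assert (X / p + X / p = 2 * X / p) by (field; lra). lra. }
    replace (2 * beta * (L * (ff W + c0))) with ((2 * beta * L) * (ff W + c0)) by ring.
    replace (L * (4 * beta / p) * X) with ((2 * beta * L) * (2 * X / p)) by (field; lra).
    apply Rmult_le_compat_l; nra. }
  assert (Hgap := gap_ba th a b Hth1 (proj1 Ha1) (Rlt_trans _ _ _ (proj2 Ha1) (proj1 Hb1')) (proj2 Hb1')).
  assert (Hgap' : (b - a) * (L * (Rpower th (p - 1) - th)) <= 2 ^ N * (sL * U * Y)).
  { eapply Rle_trans; [apply Hgap|].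
    - intros x Hx. destruct (Rle_lt_dec x r0).
      + apply Ha4; lra.
      + apply Hb4; lra.
    - assert (Rabs (w1 a) <= sL * U * Y) by (apply Hw1b; lra).
      assert (Rabs (w1 b) <= sL * U * Y) by (apply Hw1b; lra).
      replace (2 ^ N) with (2 ^ (N - 1) * 2).
      + assert (0 <= 2 ^ (N - 1)) by (apply pow_le; lra). nra.
      + replace N with (S (N - 1)) at 2 by lia. simpl. ring. }
  assert (Hthp1 : Rpower th (p - 1) = Rpower rho (p - 1) * Rpower W (p - 1)).
  { unfold th. rewrite Rpower_mult_distr by lra. reflexivity. }
  assert (HYW : Y <= Rpower W (p - 1)).
  { unfold Y. rewrite <- (sqrt_pow2 (Rpower W (p - 1))) by (apply Rlt_le, Rpower_pos).
    apply sqrt_le_1_alt. unfold X. simpl. rewrite Rmult_1_r, <- Rpower_plus.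
    apply Rle_Rpower; lra. }
  assert (Hdiff : Rpower rho (p - 1) * Y / 2 <= Rpower th (p - 1) - th).
  { assert (Rpower th (p - 1) = th * Rpower th (p - 2)).
    { replace (p - 1) with (1 + (p - 2)) by ring. apply Rpower_split1; lra. }
    assert (2 * th <= Rpower th (p - 1)) by nra.
    assert (0 < Rpower rho (p - 1)) by apply Rpower_pos.
    assert (Rpower rho (p - 1) * Y <= Rpower th (p - 1)) by (rewrite Hthp1; apply Rmult_le_compat_l; lra).
    lra. }
  assert (Hrp : 0 < Rpower rho (p - 1)) by apply Rpower_pos.
  assert (Hlab : b - a <= 2 ^ (N + 1) * U / Rpower rho (p - 1) / sL).
  { assert (Hba0 : 0 <= b - a) by lra.
    assert ((b - a) * (L * (Rpower rho (p - 1) * Y / 2)) <= 2 ^ N * (sL * U * Y)).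
    { eapply Rle_trans; [| apply Hgap']. apply Rmult_le_compat_l; auto. apply Rmult_le_compat_l; lra. }
    apply (Rmult_le_reg_r (L * (Rpower rho (p - 1) * Y / 2))); [apply Rmult_lt_0_compat; [lra| apply Rdiv_lt_0_compat; nra]|].
    replace (2 ^ (N + 1) * U / Rpower rho (p - 1) / sL * (L * (Rpower rho (p - 1) * Y / 2)))
      with (2 ^ N * (sL * U * Y)).
    - auto.
    - rewrite pow_add. rewrite <- HsL2. field. lra. }
  assert (Hsum : 1 <= KB / sL).
  { unfold KB. fold T. fold U. replace ((2 * rho * T + 2 ^ (N + 1) * U / Rpower rho (p - 1)) / sL)
      with (2 * (rho * T / sL) + 2 ^ (N + 1) * U / Rpower rho (p - 1) / sL) by (field; lra).
    lra. }
  apply (Rmult_le_reg_r (/ sL)); [apply Rinv_0_lt_compat; lra|].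
  rewrite Rinv_r by lra. exact Hsum.
Qed.


Lemma Iw_nonneg x : 1 <= x <= 2 -> 0 <= Iw x.
Proof.
  intros Hx. unfold Iw. apply Rmult_le_pos; [apply pow2_ge_0| apply pow_le; lra].
Qed.

Lemma lower_bound : p <= 6 -> / (4 * sqrt (2 ^ N) * sqrt L) <= RInt Iw 1 2.
Proof.
  intros Hp6.
  assert (HW := W_pos). assert (HWq := W_big).
  set (W := w r0) in *.
  assert (HW1 : 1 < W) by (apply (Rpower_gt1_base _ (p - 2)); lra).
  set (Q := Rpower W (p - 2)) in *.
  assert (HQ : 0 < Q) by apply Rpower_pos.
  set (P1 := Rpower W (p - 1)).
  assert (HP1 : P1 = W * Q) by (unfold P1, Q; replace (p - 1) with (1 + (p - 2)) by ring; apply Rpower_split1; lra).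
  assert (HQ1 : 1 <= Q) by lra.
  assert (H2N : 0 < 2 ^ N) by (apply pow_lt; lra).
  assert (H2N1 : 0 < 2 ^ (N - 1)) by (apply pow_lt; lra).
  assert (E2N : 2 ^ N = 2 * 2 ^ (N - 1)) by (replace N with (S (N - 1)) at 1 by lia; reflexivity).
  assert (Hgd : forall c, 1 < c < 2 -> Rabs (c ^ (N - 1) * (L * (w c - Rpower (w c) (p - 1)))) <= 2 ^ (N - 1) * L * P1).
  { intros c Hcc. assert (Hw0 : 0 < w c) by (apply Hpos; auto).
    assert (HwW : w c <= W) by (apply Hmax; lra).
    assert (Hwp : Rpower (w c) (p - 1) <= P1) by (apply Rle_Rpower_l; lra).
    assert (HP1' : 1 <= P1) by (rewrite HP1; nra).
    assert (Hwp0 : 0 < Rpower (w c) (p - 1)) by apply Rpower_pos.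
    assert (Hab : Rabs (w c - Rpower (w c) (p - 1)) <= P1).
    { destruct (Rle_lt_dec (w c) 1).
      - apply Rabs_le. lra.
      - assert (w c <= Rpower (w c) (p - 1)).
        { replace (p - 1) with (1 + (p - 2)) by ring. rewrite Rpower_split1 by lra.
          assert (1 <= Rpower (w c) (p - 2)) by (apply Rpower_ge1; lra). nra. }
        apply Rabs_le. lra. }
    rewrite !Rabs_mult. rewrite (Rabs_pos_eq (c ^ (N - 1))) by (apply pow_le; lra).
    rewrite (Rabs_pos_eq L) by lra.
    assert (c ^ (N - 1) <= 2 ^ (N - 1)) by (apply pow_incr; lra).
    assert (0 <= c ^ (N - 1)) by (apply pow_le; lra).
    assert (0 <= Rabs (w c - Rpower (w c) (p - 1))) by apply Rabs_pos.
    replace (2 ^ (N - 1) * L * P1) with (2 ^ (N - 1) * (L * P1)) by ring.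
    apply Rmult_le_compat; auto. apply Rmult_le_pos; lra. apply Rmult_le_compat_l; lra. }
  assert (Hw1r : forall r, r0 < r < 2 -> Rabs (w1 r) <= 2 ^ (N - 1) * L * P1 * (r - r0)).
  { intros r Hr.
    destruct (mvt_strict gfun (fun r => r ^ (N - 1) * (L * (w r - Rpower (w r) (p - 1)))) r0 r) as [c [Hc1 Hc2]].
    - lra.
    - intros x Hx. apply g_der. lra.
    - intros x Hx. eapply is_derive_cont. apply g_der. lra.
    - assert (gfun r0 = 0) by (unfold gfun; rewrite w1_r0; ring).
      rewrite H in Hc2. rewrite Rminus_0_r in Hc2.
      assert (Rabs (gfun r) <= 2 ^ (N - 1) * L * P1 * (r - r0)).
      { rewrite Hc2, Rabs_mult, (Rabs_pos_eq (r - r0)) by lra.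
        apply Rmult_le_compat_r; [lra|]. apply Hgd. lra. }
      eapply Rle_trans; [| exact H0]. unfold gfun. rewrite Rabs_mult.
      rewrite (Rabs_pos_eq (r ^ (N - 1))) by (apply pow_le; lra).
      assert (1 <= r ^ (N - 1)) by (apply pow_R1_Rle; lra).
      generalize (Rabs_pos (w1 r)). nra. }
  set (D := sqrt (2 ^ N * L * Q)).
  assert (HD : 0 < D) by (apply sqrt_lt_R0; apply Rmult_lt_0_compat; [nra| auto]).
  assert (HD2 : D * D = 2 ^ N * L * Q) by (apply sqrt_sqrt; apply Rlt_le, Rmult_lt_0_compat; [nra| auto]).
  set (dl := / D).
  assert (Hdl : 0 < dl) by (apply Rinv_0_lt_compat; auto).
  assert (Hhalf : forall r, r0 < r < 2 -> r - r0 <= dl -> W / 2 <= w r).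
  { intros r Hr Hrd.
    destruct (mvt_strict w w1 r0 r) as [c [Hc1 Hc2]]; [lra| intros; apply Hd1; lra| intros; apply Hc|].
    assert (Hc' := Hw1r c (conj (proj1 Hc1) (Rlt_trans _ _ _ (proj2 Hc1) (proj2 Hr)))).
    assert (Hb : Rabs (w1 c * (r - r0)) <= 2 ^ (N - 1) * L * P1 * dl * dl).
    { rewrite Rabs_mult, (Rabs_pos_eq (r - r0)) by lra.
      assert (0 <= 2 ^ (N - 1) * L * P1) by (rewrite HP1; apply Rmult_le_pos; [nra| nra]).
      assert (Rabs (w1 c) <= 2 ^ (N - 1) * L * P1 * dl) by (eapply Rle_trans; [exact Hc'| apply Rmult_le_compat_l; lra]).
      replace (2 ^ (N - 1) * L * P1 * dl * dl) with ((2 ^ (N - 1) * L * P1 * dl) * dl) by ring.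
      apply Rmult_le_compat; auto; try apply Rabs_pos; lra. }
    assert (Edl : 2 ^ (N - 1) * L * P1 * dl * dl = W / 2).
    { unfold dl. rewrite HP1. 
      replace (2 ^ (N - 1) * L * (W * Q) * / D * / D) with (2 ^ (N - 1) * L * (W * Q) / (D * D)) by (field; lra).
      rewrite HD2, E2N. field. repeat split; lra. }
    rewrite Edl in Hb. apply Rabs_le_between in Hb.
    fold W in Hc2. lra. }
  assert (Hr0d : r0 + dl < 2).
  { destruct (Rlt_le_dec (r0 + dl) 2) as [|Hge]; auto. exfalso.
    destruct (cont_eps w 2 (Hc 2) (W / 2)) as [d [Hd Hy]]; [lra|].
    set (y := Rmax ((r0 + 2) / 2) (2 - d / 2)).
    assert (Hy1 : (r0 + 2) / 2 <= y) by apply Rmax_l.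
    assert (Hy2 : y < 2) by (unfold y; apply Rmax_lub_lt; lra).
    assert (Hy3 : 2 - d / 2 <= y) by apply Rmax_r.
    assert (W / 2 <= w y) by (apply Hhalf; lra).
    specialize (Hy y). rewrite Hw2, Rminus_0_r in Hy.
    assert (Rabs (w y) < W / 2) by (apply Hy; rewrite Rabs_left; lra).
    rewrite Rabs_pos_eq in H0 by lra. lra. }
  rewrite (int_split r0 (r0 + dl)).
  assert (I1 : 0 <= RInt Iw 1 r0) by (apply RInt_ge_0; [lra| apply Iw_ex| intros; apply Iw_nonneg; lra]).
  assert (I3 : 0 <= RInt Iw (r0 + dl) 2) by (apply RInt_ge_0; [lra| apply Iw_ex| intros; apply Iw_nonneg; lra]).
  assert (I2 : (W / 2) ^ 2 * (r0 + dl - r0) <= RInt Iw r0 (r0 + dl)).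
  { apply RInt_ge_const; [lra| apply Iw_ex|]. intros x Hx. unfold Iw.
    assert (W / 2 <= w x) by (apply Hhalf; lra).
    assert ((W / 2) ^ 2 <= w x ^ 2) by (apply pow_incr; lra).
    assert (1 <= x ^ (N - 1)) by (apply pow_R1_Rle; lra).
    assert (0 <= (W/2) ^ 2) by apply pow2_ge_0. nra. }
  replace (r0 + dl - r0) with dl in I2 by ring.
  assert (HQ4 : Q <= W ^ 4).
  { unfold Q. rewrite <- Rpower_pow by lra. apply Rle_Rpower; [lra|]. simpl. lra. }
  assert (HDb : D <= sqrt (2 ^ N) * sqrt L * W ^ 2).
  { unfold D. rewrite <- sqrt_mult_alt by lra. rewrite <- (sqrt_pow2 (W ^ 2)) by (apply pow2_ge_0).
    rewrite <- sqrt_mult_alt by (apply Rmult_le_pos; lra).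
    apply sqrt_le_1_alt. replace ((W ^ 2) ^ 2) with (W ^ 4) by ring.
    apply Rmult_le_compat_l; [nra| auto]. }
  assert (Hs1 : 0 < sqrt (2 ^ N)) by (apply sqrt_lt_R0; lra).
  assert (Hs2 : 0 < sqrt L) by (apply sqrt_lt_R0; lra).
  assert (Hfin : / (4 * sqrt (2 ^ N) * sqrt L) <= (W / 2) ^ 2 * dl).
  { unfold dl. replace ((W / 2) ^ 2 * / D) with (W ^ 2 / (4 * D)) by (field; lra).
    replace (/ (4 * sqrt (2 ^ N) * sqrt L)) with (W ^ 2 / (4 * (sqrt (2 ^ N) * sqrt L * W ^ 2))) by (field; repeat split; lra).
    unfold Rdiv. apply Rmult_le_compat_l; [apply pow2_ge_0|].
    apply Rinv_le_contravar; lra. }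
  lra.
Qed.


End WithMax.

Lemma mass_lower : p <= 6 -> / (4 * sqrt (2 ^ N) * sqrt L) <= RInt Iw 1 2.
Proof.
  intros Hp6. destruct max_exists as [r0 [Hr0 Hm]]. apply (lower_bound r0); auto.
Qed.

Lemma mass_upper : KB * KB < L -> RInt Iw 1 2 <= CA Wbar / sqrt L.
Proof.
  intros HK. destruct max_exists as [r0 [Hr0 Hm]].
  destruct (Rle_lt_dec Wbar (w r0)) as [Hge|Hlt].
  - exfalso. generalize (regimeB r0 Hr0 Hm Hge). intros Hs.
    assert (0 <= sqrt L) by apply sqrt_pos.
    assert (sqrt L * sqrt L = L) by (apply sqrt_sqrt; lra).
    nra.
  - apply (regimeA r0 Hr0 Hm). lra.
Qed.

Lemma mass_nonneg : 0 <= RInt Iw 1 2.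
Proof.
  apply RInt_ge_0; [lra| apply Iw_ex| intros x Hx; unfold Iw; apply Rmult_le_pos; [apply pow2_ge_0| apply pow_le; lra]].
Qed.

End Analysis.


Definition cl (r : R) := Rmax 1 (Rmin 2 r).

Lemma cl_in r : 1 <= cl r <= 2.
Proof. unfold cl, Rmax, Rmin. repeat destruct Rle_dec; lra. Qed.

Lemma cl_id r : 1 <= r <= 2 -> cl r = r.
Proof. intros H. unfold cl, Rmax, Rmin. repeat destruct Rle_dec; lra. Qed.

Lemma cl_lip x y : Rabs (cl y - cl x) <= Rabs (y - x).
Proof.
  unfold cl, Rmax, Rmin. repeat destruct Rle_dec;
  unfold Rabs; repeat destruct Rcase_abs; lra.
Qed.

Lemma vc_cont (v : R -> R) :
  (forall r, 1 <= r <= 2 ->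
     filterlim v (within (fun x => 1 <= x <= 2) (locally r)) (locally (v r))) ->
  forall r, continuity_pt (fun t => v (cl t)) r.
Proof.
  intros Hv r. apply continuity_pt_filterlim.
  apply (filterlim_comp _ _ _ cl v (locally r) (within (fun x => 1 <= x <= 2) (locally (cl r)))).
  - intros P [eps HP]. exists eps. intros y Hy. apply HP.
    + unfold ball in *; simpl in *. unfold AbsRing_ball in *. unfold abs, minus, plus, opp in *; simpl in *.
      eapply Rle_lt_trans; [apply cl_lip| exact Hy].
    + apply cl_in.
  - apply Hv, cl_in.
Qed.

Section Norm.
Variables (N : nat) (p L : R) (v : R -> R).
Hypothesis HN : (2 <= N)%nat.
Hypothesis Hp : 2 < p.
Hypothesis HL : 0 < L.
Hypothesis Hsol : radial_pos_solution N p L v.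

Definition sc := Rpower L (/ (p - 2)).
Definition wn t := v (cl t) / sc.
Definition wn1 t := Derive v t / sc.
Definition wn2 t := Derive (Derive v) t / sc.

Lemma sc_pos : 0 < sc.
Proof. apply Rpower_pos. Qed.

Lemma sc_q : Rpower sc (p - 2) = L.
Proof. apply Rpower_inv_e; lra. Qed.

Lemma loc_eq r : 1 < r < 2 -> locally r (fun t => v t = v (cl t)).
Proof.
  intros Hr. assert (He : 0 < Rmin (r - 1) (2 - r)) by (apply Rmin_pos; lra).
  exists (mkposreal _ He). intros y Hy.
  unfold ball in Hy; simpl in Hy. unfold AbsRing_ball in Hy. unfold abs, minus, plus, opp in Hy; simpl in Hy.
  generalize (Rmin_l (r - 1) (2 - r)) (Rmin_r (r - 1) (2 - r)). intros.
  apply Rabs_def2 in Hy. rewrite cl_id; [reflexivity| lra].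
Qed.

Lemma wn_cont r : continuity_pt wn r.
Proof.
  destruct Hsol as [Hc _]. unfold wn.
  apply (continuity_pt_mult (fun t => v (cl t)) (fun _ => / sc)).
  - apply vc_cont. exact Hc.
  - apply continuity_pt_const. intros u w; reflexivity.
Qed.

Lemma wn_1 : wn 1 = 0.
Proof. destruct Hsol as [_ [H1 _]]. unfold wn. rewrite cl_id by lra. rewrite H1. unfold Rdiv; ring. Qed.

Lemma wn_2 : wn 2 = 0.
Proof. destruct Hsol as [_ [_ [H2 _]]]. unfold wn. rewrite cl_id by lra. rewrite H2. unfold Rdiv; ring. Qed.

Lemma wn_pos r : 1 < r < 2 -> 0 < wn r.
Proof.
  intros Hr. destruct Hsol as [_ [_ [_ H]]]. unfold wn. rewrite cl_id by lra.
  apply Rdiv_lt_0_compat; [apply H; auto| apply sc_pos].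
Qed.

Lemma wn_d1 r : 1 < r < 2 -> is_derive wn r (wn1 r).
Proof.
  intros Hr. destruct Hsol as [_ [_ [_ H]]]. destruct (H r Hr) as [_ [Hd _]].
  unfold wn, wn1.
  apply (is_derive_ext' (fun t => / sc * v (cl t))). intros t; unfold Rdiv; ring.
  eapply is_derive_eq'. apply is_derive_scal.
  apply (is_derive_ext_loc v). apply loc_eq, Hr.
  apply Derive_correct, Hd. toR. unfold Rdiv; ring.
Qed.

Lemma wn_d2 r : 1 < r < 2 -> is_derive wn1 r (wn2 r).
Proof.
  intros Hr. destruct Hsol as [_ [_ [_ H]]]. destruct (H r Hr) as [_ [_ [Hd _]]].
  unfold wn1, wn2.
  apply (is_derive_ext' (fun t => / sc * Derive v t)). intros t; unfold Rdiv; ring.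
  eapply is_derive_eq'. apply is_derive_scal.
  apply Derive_correct, Hd. toR. unfold Rdiv; ring.
Qed.

Lemma wn_eq r : 1 < r < 2 -> wn2 r = L * (wn r - Rpower (wn r) (p - 1)) - (INR N - 1) / r * wn1 r.
Proof.
  intros Hr. destruct Hsol as [_ [_ [_ H]]]. destruct (H r Hr) as [Hv [_ [_ He]]].
  unfold wn, wn1, wn2. rewrite cl_id by lra.
  assert (Hs := sc_pos).
  assert (E : Rpower (v r) (p - 1) = sc * L * Rpower (v r / sc) (p - 1)).
  { replace (v r) with (sc * (v r / sc)) at 1 by (field; lra).
    rewrite <- Rpower_mult_distr by (try apply Rdiv_lt_0_compat; lra).
    replace (p - 1) with (1 + (p - 2)) at 1 by ring. rewrite Rpower_split1 by lra.
    rewrite sc_q. ring. }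
  rewrite E in He.
  apply (Rmult_eq_reg_l sc); [| lra].
  replace (sc * (Derive (Derive v) r / sc)) with (Derive (Derive v) r) by (field; lra).
  replace (sc * (L * (v r / sc - Rpower (v r / sc) (p - 1)) - (INR N - 1) / r * (Derive v r / sc)))
    with (L * v r - sc * L * Rpower (v r / sc) (p - 1) - (INR N - 1) / r * Derive v r) by (field; lra).
  lra.
Qed.

Lemma mass_eq : radial_mass N v = Rpower L (2 / (p - 2)) * RInt (Iw N wn) 1 2.
Proof.
  unfold radial_mass.
  assert (Hs := sc_pos).
  assert (Es : Rpower L (2 / (p - 2)) = sc ^ 2).
  { unfold sc. rewrite <- Rpower_pow by apply Rpower_pos. rewrite Rpower_mult. f_equal. simpl. field. lra. }
  rewrite Es.
  transitivity (scal (sc ^ 2) (RInt (Iw N wn) 1 2)); [| reflexivity].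
  rewrite <- (RInt_scal (V := R_CompleteNormedModule) (Iw N wn) 1 2 (sc ^ 2)).
  - apply RInt_ext. intros x Hx. rewrite Rmin_left, Rmax_right in Hx by lra.
    unfold Iw, wn. rewrite cl_id by lra. simpl. unfold scal; simpl; unfold mult; simpl. field. lra.
  - apply (Iw_ex N wn). apply wn_cont.
Qed.

End Norm.

Lemma Rpower_e_eq L p : 0 < L -> Rpower L (2 / (p - 2)) / sqrt L = Rpower L (2 / (p - 2) - / 2).
Proof.
  intros HL. unfold Rminus at 2. rewrite Rpower_plus, Rpower_Ropp, Rpower_sqrt by auto. reflexivity.
Qed.

Lemma final_bounds N p : (2 <= N)%nat -> 2 < p ->
  exists K C c, 0 < c /\ forall L v, 0 < L -> radial_pos_solution N p L v ->
    0 <= radial_mass N v /\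
    (p <= 6 -> c * Rpower L (2 / (p - 2) - / 2) <= radial_mass N v) /\
    (K < L -> radial_mass N v <= C * Rpower L (2 / (p - 2) - / 2)).
Proof.
  intros HN Hp.
  exists (KB N p * KB N p), (CA N p (Wbar N p)), (/ (4 * sqrt (2 ^ N))).
  split.
  { apply Rinv_0_lt_compat. assert (0 < sqrt (2 ^ N)) by (apply sqrt_lt_R0, pow_lt; lra). lra. }
  intros L v HL Hsol.
  rewrite (mass_eq N p L v Hp Hsol).
  assert (Hh := fun r Hr => wn_pos N p L v Hsol r Hr).
  assert (Hsq : 0 < sqrt L) by (apply sqrt_lt_R0; lra).
  assert (Hpw : 0 < Rpower L (2 / (p - 2))) by apply Rpower_pos.
  assert (Hs2 : 0 < sqrt (2 ^ N)) by (apply sqrt_lt_R0, pow_lt; lra).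
  pose proof (wn_cont N p L v Hsol) as A1.
  pose proof (wn_1 N p L v Hsol) as A2.
  pose proof (wn_2 N p L v Hsol) as A3.
  pose proof (wn_d1 N p L v Hsol) as A4.
  pose proof (wn_d2 N p L v Hsol) as A5.
  pose proof (wn_eq N p L v Hp HL Hsol) as A6.
  split; [| split].
  - apply Rmult_le_pos; [lra|]. apply (mass_nonneg N (wn p L v) A1).
  - intros Hp6. assert (Hl := mass_lower N p L _ _ _ HN Hp HL A1 A2 A3 Hh A4 A5 A6 Hp6).
    rewrite <- Rpower_e_eq by auto.
    replace (/ (4 * sqrt (2 ^ N)) * (Rpower L (2 / (p - 2)) / sqrt L)) with
      (Rpower L (2 / (p - 2)) * / (4 * sqrt (2 ^ N) * sqrt L)) by (field; lra).
    apply Rmult_le_compat_l; lra.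
  - intros HK. assert (Hu := mass_upper N p L _ _ _ HN Hp HL A1 A2 A3 Hh A4 A5 A6 HK).
    rewrite <- Rpower_e_eq by auto.
    replace (CA N p (Wbar N p) * (Rpower L (2 / (p - 2)) / sqrt L)) with
      (Rpower L (2 / (p - 2)) * (CA N p (Wbar N p) / sqrt L)) by (field; lra).
    apply Rmult_le_compat_l; lra.
Qed.

Lemma liminf_exists (f : R -> R) c C K : 0 < c -> (forall L, K < L -> c <= f L <= C) ->
  exists l, 0 < l /\ liminf_pinfty_is f l.
Proof.
  intros Hc Hf.
  set (S := fun y => exists M, forall L, M < L -> y <= f L).
  assert (Hbd : bound S).
  { exists C. intros y [M HM]. set (L := Rmax M K + 1).
    assert (M < L) by (unfold L; generalize (Rmax_l M K); lra).
    assert (K < L) by (unfold L; generalize (Rmax_r M K); lra).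
    specialize (HM L H). specialize (Hf L H0). lra. }
  assert (Hne : exists y, S y) by (exists c; exists K; intros L HL; apply Hf; auto).
  destruct (completeness S Hbd Hne) as [l [Hub Hlub]].
  assert (Hcl : c <= l) by (apply Hub; exists K; intros L HL; apply Hf; auto).
  exists l. split; [lra|]. split.
  - intros eps He. apply NNPP. intros Hno.
    assert (l <= l - eps); [| lra].
    apply Hlub. intros y [M HM]. apply Rnot_lt_le. intros Hy. apply Hno.
    exists M. intros L HL. specialize (HM L HL). lra.
  - intros eps He M. apply NNPP. intros Hno.
    assert (l + eps <= l); [| lra].
    apply Hub. exists M. intros L HL. apply Rnot_lt_le. intros Hlt. apply Hno. exists L. split; auto.
Qed.

Theorem theorem2p7 (N : nat) (p : R) (u : R -> R -> R) :
  (2 <= N)%nat -> 2 < p ->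
  ((3 <= N)%nat -> p < 2 * INR N / (INR N - 2)) ->
  (forall lam, 0 < lam -> radial_pos_solution N p lam (u lam)) ->
  ((((N = 2)%nat /\ p < 6) \/ (3 <= N)%nat) ->
      is_lim (fun lam => radial_mass N (u lam)) p_infty p_infty) /\
  ((N = 2)%nat -> p = 6 ->
      exists l, 0 < l /\ liminf_pinfty_is (fun lam => radial_mass N (u lam)) l) /\
  ((N = 2)%nat -> 6 < p ->
      is_lim (fun lam => radial_mass N (u lam)) p_infty 0).
Proof.
  intros HN Hp Hcrit Hsol.
  destruct (final_bounds N p HN Hp) as [K [C [c [Hc Hb]]]].
  set (e := 2 / (p - 2) - / 2) in *.
  split; [| split].
  - intros Hcase.
    assert (Hp6 : p < 6).
    { destruct Hcase as [[_ H]|H3]; auto.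
      specialize (Hcrit H3). apply le_INR in H3. simpl in H3.
      assert (2 * INR N / (INR N - 2) <= 6).
      { apply (Rmult_le_reg_r (INR N - 2)); [lra|].
        replace (2 * INR N / (INR N - 2) * (INR N - 2)) with (2 * INR N) by (field; lra). lra. }
      lra. }
    assert (He : 0 < e).
    { unfold e. assert (/ 2 < 2 / (p - 2)); [| lra].
      apply (Rmult_lt_reg_r (2 * (p - 2))); [lra|].
      replace (/ 2 * (2 * (p - 2))) with (p - 2) by field.
      replace (2 / (p - 2) * (2 * (p - 2))) with 4 by (field; lra). lra. }
    intros P [M HM]. simpl.
    set (A := (Rabs M + 1) / c).
    assert (HA : 0 < A) by (unfold A; apply Rdiv_lt_0_compat; [generalize (Rabs_pos M); lra| lra]).
    set (B := Rmax 1 (Rpower A (/ e))).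
    exists B. intros L HL.
    assert (HL0 : 0 < L) by (generalize (Rmax_l 1 (Rpower A (/ e))); unfold B in HL; lra).
    apply HM.
    destruct (Hb L (u L) HL0 (Hsol L HL0)) as [_ [Hlow _]].
    specialize (Hlow (Rlt_le _ _ Hp6)).
    assert (HAe : A < Rpower L e).
    { rewrite <- (Rpower_inv_e A e) by lra. apply Rlt_Rpower_l; [lra|].
      split; [apply Rpower_pos|]. generalize (Rmax_r 1 (Rpower A (/ e))). unfold B in HL. lra. }
    assert (c * A = Rabs M + 1) by (unfold A; field; lra).
    assert (c * A < c * Rpower L e) by (apply Rmult_lt_compat_l; lra).
    generalize (Rle_abs M). lra.
  - intros HN2 Hp6.
    apply (liminf_exists _ c C (Rmax K 0)); auto.
    intros L HL.
    assert (HL0 : 0 < L) by (generalize (Rmax_r K 0); lra).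
    assert (HKL : K < L) by (generalize (Rmax_l K 0); lra).
    destruct (Hb L (u L) HL0 (Hsol L HL0)) as [_ [Hlow Hup]].
    assert (Ee : e = 0) by (unfold e; rewrite Hp6; field).
    rewrite Ee, Rpower_O in Hlow, Hup by auto.
    rewrite Rmult_1_r in Hlow, Hup.
    split; [apply Hlow; lra| apply Hup; auto].
  - intros HN2 Hp6.
    assert (He : e < 0).
    { unfold e. assert (2 / (p - 2) < / 2); [| lra].
      apply (Rmult_lt_reg_r (2 * (p - 2))); [lra|].
      replace (/ 2 * (2 * (p - 2))) with (p - 2) by field.
      replace (2 / (p - 2) * (2 * (p - 2))) with 4 by (field; lra). lra. }
    intros P [eps HP]. simpl.
    set (A := Rabs C / eps + 1).
    assert (HA : 1 <= A) by (unfold A; assert (0 <= Rabs C / eps) by (apply Rdiv_le_0_compat; [apply Rabs_pos| apply cond_pos]); lra).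
    set (B := Rmax (Rmax K 1) (Rpower A (/ (- e)))).
    exists B. intros L HL.
    assert (HL1 : Rmax K 1 <= B) by apply Rmax_l.
    assert (HL0 : 0 < L) by (generalize (Rmax_r K 1); lra).
    assert (HKL : K < L) by (generalize (Rmax_l K 1); lra).
    apply HP.
    destruct (Hb L (u L) HL0 (Hsol L HL0)) as [Hnn [_ Hup]].
    specialize (Hup HKL).
    assert (HAe : A < Rpower L (- e)).
    { rewrite <- (Rpower_inv_e A (- e)) by lra. apply Rlt_Rpower_l; [lra|].
      split; [apply Rpower_pos|]. generalize (Rmax_r (Rmax K 1) (Rpower A (/ (- e)))). unfold B in HL. lra. }
    assert (HLe : Rpower L e = / Rpower L (- e)) by (rewrite Rpower_Ropp, Rinv_inv; reflexivity).
    assert (Hpe : 0 < Rpower L (- e)) by apply Rpower_pos.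
    assert (Heps := cond_pos eps).
    assert (Hfin : C * Rpower L e < eps).
    { rewrite HLe.
      assert (C * / Rpower L (- e) <= Rabs C * / Rpower L (- e)).
      { apply Rmult_le_compat_r; [apply Rlt_le, Rinv_0_lt_compat; lra| apply Rle_abs]. }
      assert (Rabs C * / Rpower L (- e) < eps); [| lra].
      apply (Rmult_lt_reg_r (Rpower L (- e))); auto.
      replace (Rabs C * / Rpower L (- e) * Rpower L (- e)) with (Rabs C) by (field; lra).
      assert (eps * A < eps * Rpower L (- e)) by (apply Rmult_lt_compat_l; lra).
      assert (eps * A = Rabs C + eps) by (unfold A; field; lra).
      lra. }
    unfold ball; simpl. unfold AbsRing_ball; simpl. unfold abs, minus, plus, opp; simpl.
    rewrite Ropp_0, Rplus_0_r, Rabs_pos_eq by lra. lra.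
Qed.
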